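(* Let $\bar\delta,\underline\delta\ge1$ be integers, $\pi$ the switching policy $(\bar\delta,\underline\delta)$, and $N>\max\{\bar\delta,\underline\delta\}$. Let $\nu_{i,j,\delta}$ be the stationary distribution of $\{S_t\}$ under $\pi$ in the original (untruncated) system, and $\nu_{i,j,\delta}(N)$ that of the truncated chain under $\pi$. Then $\nu_{i,j,\delta}(N)=\nu_{i,j,\delta}$ for all $(i,j,\delta)\in\mathcal S_N\setminus\{(1,0,N),(0,1,N)\}$, and $$\nu_{1,0,N}(N)=\frac{\bar qp_f}{1-\bar qp_f}\nu_{1,0,N-1},\qquad \nu_{0,1,N}(N)=\frac{\bar pp_f}{1-\bar pp_f}\nu_{0,1,N-1}.$$ Moreover, $\mathcal L(\pi,N)=\mathcal L(\pi)-\sigma(\pi,N)$, where $$\sigma(\pi,N)=\frac{\beta\nu_{0,0,0}\,p\,\bar q^{N}p_f^{N-\bar\delta+1}}{(1-\bar qp_f)^2}+\frac{(1-\beta)\nu_{1,1,0}\,q\,\bar p^{N}p_f^{N-\underline\delta+1}}{(1-\bar pp_f)^2}.$$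
   Context: Fix $p,q\in(0,1)$, $\bar p=1-p$, $\bar q=1-q$. The source $\{X_t\}$ is a Markov chain on $\{0,1\}$ with $\Pr[X_{t+1}=1\mid X_t=0]=p$, $\Pr[X_{t+1}=0\mid X_t=1]=q$; channel i.i.d. Bernoulli with success probability $p_s\in(0,1]$, independent of the source, $p_f=1-p_s$. Estimate dynamics: if $A_t=1$ and the transmission succeeds then $\hat X_{t+1}=X_{t+1}$, otherwise $\hat X_{t+1}=\hat X_t$. Original system: age $\Delta_{t+1}=\Delta_t+1$ if $X_{t+1}\ne\hat X_{t+1}$, else $0$; state $S_t=(X_t,\hat X_t,\Delta_t)\in\mathcal S=\{(0,0,0),(1,1,0)\}\cup\{(1,0,\delta),(0,1,\delta):\delta\ge1\}$, $S_1=(0,0,0)$. Truncated system with level $N$: age $\Delta_{t+1}=\min(\Delta_t+1,N)$ if $X_{t+1}\ne\hat X_{t+1}$, else $0$; state space $\mathcal S_N=\{(0,0,0),(1,1,0)\}\cup\{(1,0,\delta),(0,1,\delta):1\le\delta\le N\}$. In both, per-state cost $c(s)=\beta\delta$ for $s=(1,0,\delta)$, $(1-\beta)\delta$ for $s=(0,1,\delta)$, $0$ for synced states, $\beta\in[0,1]$; per-stage cost $\ell(s,a)=\mathbb E[c(S_{t+1})\mid S_t=s,A_t=a]+\lambda\mathbb 1\{a=1\}$, $\lambda\ge0$; $\mathcal L(\pi)$ and $\mathcal L(\pi,N)$ denote the average costs $\limsup_{T\to\infty}\frac1T\sum_{t=1}^T\mathbb E^\pi[\ell(S_t,A_t)\mid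 S_1=(0,0,0)]$ in the original and truncated systems, respectively. For integers $\bar\delta,\underline\delta\ge1$, the switching policy $(\bar\delta,\underline\delta)$ transmits iff $S_t=(1,0,\delta)$ with $\delta\ge\bar\delta$ or $S_t=(0,1,\delta)$ with $\delta\ge\underline\delta$. *)

(* Defs.v *)
From Stdlib Require Import Reals Lra Bool Arith.
From Coquelicot Require Import Coquelicot.
Open Scope R_scope.

(** States (i, j, delta) with i = X_t, j = \hat X_t encoded as booleans
    (false = 0, true = 1).  The valid states are described by [in_orig]
    and [in_trunc]; values of functions at other triples are never used. *)
Definition state : Type := (bool * bool * nat)%type.

Definition state_eqb (s t : state) : bool :=
  match s, t with
  | (a, b, c), (a', b', c') => Bool.eqb a a' && Bool.eqb b b' && Nat.eqb c c'
  end.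

Definition ind (s' : state) (s : state) : R := if state_eqb s s' then 1 else 0.

Definition in_orig (s : state) : Prop :=
  s = (false, false, 0%nat) \/ s = (true, true, 0%nat) \/
  exists d : nat, (1 <= d)%nat /\ (s = (true, false, d) \/ s = (false, true, d)).

Definition in_trunc (N : nat) (s : state) : Prop :=
  s = (false, false, 0%nat) \/ s = (true, true, 0%nat) \/
  exists d : nat, (1 <= d <= N)%nat /\ (s = (true, false, d) \/ s = (false, true, d)).

Definition src (p q : R) (x x' : bool) : R :=
  match x, x' with
  | false, false => 1 - p
  | false, true => p
  | true, false => q
  | true, true => 1 - q
  end.

(** next state given X_{t+1} = x', \hat X_{t+1} = xh', previous age d;
    [age] is the age-update map (S for the original system,
    fun d => min (d+1) N for the truncated one). *)
Definition next (age : nat -> nat) (x' xh' : bool) (d : nat) : state :=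
  if Bool.eqb x' xh' then (x', xh', 0%nat) else (x', xh', age d).

Definition age_orig (d : nat) : nat := S d.
Definition age_trunc (N : nat) (d : nat) : nat := Nat.min (S d) N.

(** E[g(S_{t+1}) | S_t = s, A_t = a]; ps = success probability, pf = 1 - ps *)
Definition Enext (p q ps : R) (age : nat -> nat) (a : bool) (s : state)
  (g : state -> R) : R :=
  let '(x, xh, d) := s in
  let out (x' : bool) : R :=
    if a then ps * g (next age x' x' d) + (1 - ps) * g (next age x' xh d)
    else g (next age x' xh d) in
  src p q x false * out false + src p q x true * out true.

Definition trans (p q ps : R) (age : nat -> nat) (a : bool) (s s' : state) : R :=
  Enext p q ps age a s (ind s').

Definition switching (dbar dund : nat) (s : state) : bool :=
  match s with
  | (true, false, d) => Nat.leb dbar d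
  | (false, true, d) => Nat.leb dund d
  | _ => false
  end.

Definition cost (beta : R) (s : state) : R :=
  match s with
  | (true, false, d) => beta * INR d
  | (false, true, d) => (1 - beta) * INR d
  | _ => 0
  end.

Definition stage (p q ps : R) (age : nat -> nat) (beta lam : R)
  (s : state) (a : bool) : R :=
  Enext p q ps age a s (cost beta) + (if a then lam else 0).

Definition sum_orig (f : state -> R) : R :=
  f (false, false, 0%nat) + f (true, true, 0%nat)
  + Series (fun k => f (true, false, S k)) + Series (fun k => f (false, true, S k)).

Definition summable_orig (f : state -> R) : Prop :=
  ex_series (fun k => f (true, false, S k)) /\ ex_series (fun k => f (false, true, S k)).

Fixpoint rsum (n : nat) (f : nat -> R) : R :=
  match n with
  | O => 0
  | S n' => rsum n' f + f n'
  end.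

Definition sum_trunc (N : nat) (f : state -> R) : R :=
  f (false, false, 0%nat) + f (true, true, 0%nat)
  + rsum N (fun k => f (true, false, S k)) + rsum N (fun k => f (false, true, S k)).

Definition stationary_orig (p q ps : R) (dbar dund : nat) (nu : state -> R) : Prop :=
  (forall s, in_orig s -> 0 <= nu s) /\ summable_orig nu /\ sum_orig nu = 1 /\
  forall s', in_orig s' ->
    nu s' = sum_orig (fun s => nu s * trans p q ps age_orig (switching dbar dund s) s s').

Definition stationary_trunc (p q ps : R) (N dbar dund : nat) (nu : state -> R) : Prop :=
  (forall s, in_trunc N s -> 0 <= nu s) /\ sum_trunc N nu = 1 /\
  forall s', in_trunc N s' ->
    nu s' = sum_trunc N (fun s => nu s * trans p q ps (age_trunc N) (switching dbar dund s) s s').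

(** distribution of S_{t+1} (t = 0 is time 1, S_1 = (0,0,0)) *)
Fixpoint dist (sum : (state -> R) -> R) (K : state -> state -> R) (t : nat)
  : state -> R :=
  match t with
  | O => ind (false, false, 0%nat)
  | S t' => fun s' => sum (fun s => dist sum K t' s * K s s')
  end.

Definition avg_cost (sum : (state -> R) -> R) (age : nat -> nat)
  (p q ps beta lam : R) (pi : state -> bool) : Rbar :=
  let K := fun s s' => trans p q ps age (pi s) s s' in
  LimSup_seq (fun T => / INR (S T) *
    sum_f_R0 (fun t => sum (fun s => dist sum K t s * stage p q ps age beta lam s (pi s))) T).

Definition L_orig (p q ps beta lam : R) (dbar dund : nat) : Rbar :=
  avg_cost sum_orig age_orig p q ps beta lam (switching dbar dund).

Definition L_trunc (p q ps beta lam : R) (N dbar dund : nat) : Rbar :=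
  avg_cost (sum_trunc N) (age_trunc N) p q ps beta lam (switching dbar dund).

(* Main.v *)
Require Import Defs.
From Stdlib Require Import Reals Arith Lra Lia FunctionalExtensionality.
From Coquelicot Require Import Coquelicot.
Require Import Defs.
Open Scope R_scope.

Module A.

Lemma rsum_ext n f g : (forall k, (k < n)%nat -> f k = g k) -> rsum n f = rsum n g.
Proof. induction n; simpl; intros H; [reflexivity|]. rewrite IHn by (intros; apply H; lia). rewrite H by lia. reflexivity. Qed.

Lemma rsum_plus n f g : rsum n (fun k => f k + g k) = rsum n f + rsum n g.
Proof. induction n; simpl; [lra|]. rewrite IHn. ring. Qed.

Lemma rsum_scal n c f : rsum n (fun k => c * f k) = c * rsum n f.
Proof. induction n; simpl; [ring|]. rewrite IHn. ring. Qed.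

Lemma rsum_zero n f : (forall k, (k < n)%nat -> f k = 0) -> rsum n f = 0.
Proof. intros H. rewrite (rsum_ext n f (fun _ => 0 * 1)) by (intros; rewrite H; auto; ring).
  rewrite rsum_scal. ring. Qed.

Lemma rsum_shift n f : rsum (S n) f = f O + rsum n (fun k => f (S k)).
Proof. induction n; simpl in *; [ring|]. rewrite IHn. ring. Qed.

Lemma rsum_add n m f : rsum (n + m) f = rsum n f + rsum m (fun k => f (n + k)%nat).
Proof. induction m; simpl. rewrite Nat.add_0_r; ring. rewrite Nat.add_succ_r. simpl. rewrite IHm. ring. Qed.

Lemma rsum_point n f j : (j < n)%nat -> (forall k, (k < n)%nat -> k <> j -> f k = 0) -> rsum n f = f j.
Proof.
  induction n; intros Hj H; [lia|]. simpl.
  destruct (Nat.eq_dec j n) as [->|Hne].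
  - rewrite rsum_zero; [ring|]. intros k Hk. apply H; lia.
  - rewrite IHn by (try lia; intros; apply H; lia). rewrite (H n) by lia. ring.
Qed.

Lemma rsum_nonneg n f : (forall k, (k < n)%nat -> 0 <= f k) -> 0 <= rsum n f.
Proof. induction n; simpl; intros H; [lra|]. pose proof (H n ltac:(lia)). pose proof (IHn ltac:(intros; apply H; lia)). lra. Qed.

Lemma rsum_ge_term n f j : (j < n)%nat -> (forall k, (k < n)%nat -> 0 <= f k) -> f j <= rsum n f.
Proof.
  induction n; intros Hj H; [lia|]. simpl.
  destruct (Nat.eq_dec j n) as [->|Hne].
  - pose proof (rsum_nonneg n f ltac:(intros; apply H; lia)). lra.
  - pose proof (IHn ltac:(lia) ltac:(intros; apply H; lia)). pose proof (H n ltac:(lia)). lra.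
Qed.

Lemma sum_f_rsum a n : sum_f_R0 a n = rsum (S n) a.
Proof. induction n; simpl; [ring|]. rewrite IHn. simpl. ring. Qed.

Lemma is_series_fin a n : (forall k, (n <= k)%nat -> a k = 0) -> is_series a (rsum n a).
Proof.
  intros H. cut (is_lim_seq (sum_n a) (rsum n a)). intro HH; exact HH.
  apply (is_lim_seq_ext_loc (fun _ => rsum n a)).
  - exists n. intros m Hm. rewrite sum_n_Reals, sum_f_rsum.
    replace (S m) with (n + (S m - n))%nat by lia. rewrite rsum_add.
    rewrite (rsum_zero (S m - n)); [ring|]. intros k _. apply H. lia.
  - apply is_lim_seq_const.
Qed.

Lemma Series_fin a n : (forall k, (n <= k)%nat -> a k = 0) -> Series a = rsum n a.
Proof. intros H. apply is_series_unique, is_series_fin, H. Qed.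

Lemma ex_series_fin a n : (forall k, (n <= k)%nat -> a k = 0) -> ex_series a.
Proof. intros H. eexists. apply (is_series_fin a n H). Qed.

Lemma Series_point a j : (forall k, k <> j -> a k = 0) -> Series a = a j.
Proof. intros H. rewrite (Series_fin a (S j)). apply rsum_point; auto. intros k Hk; apply H; lia. Qed.

Lemma Series_zero a : (forall k, a k = 0) -> Series a = 0.
Proof. intros H. rewrite (Series_fin a O) by auto. reflexivity. Qed.

Lemma Series_split a n : ex_series a -> Series a = rsum n a + Series (fun k => a (n + k)%nat).
Proof.
  intros H. destruct n. simpl. rewrite Rplus_0_l. apply Series_ext. intros; f_equal.
  rewrite Series_incr_n with (n := S n) by (auto; lia). simpl pred. rewrite sum_f_rsum. reflexivity.
Qed.

End A.
Import A.

Module B.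

Lemma state_eqb_refl s : state_eqb s s = true.
Proof. destruct s as [[a b] c]. simpl. rewrite Nat.eqb_refl. destruct a, b; reflexivity. Qed.

Lemma state_eqb_eq s t : state_eqb s t = true -> s = t.
Proof. destruct s as [[a b] c], t as [[a' b'] c']. simpl.
  intros H. apply andb_prop in H as [H H3]. apply andb_prop in H as [H1 H2].
  apply Bool.eqb_prop in H1, H2. apply Nat.eqb_eq in H3. subst. reflexivity. Qed.

Lemma ind_eq (t x : state) : x = t -> ind t x = 1.
Proof. intros ->. unfold ind. rewrite state_eqb_refl. reflexivity. Qed.

Lemma ind_ne (t x : state) : x <> t -> ind t x = 0.
Proof. intros H. unfold ind. destruct (state_eqb x t) eqn:E; [|reflexivity]. apply state_eqb_eq in E. contradiction. Qed.

Ltac solve_ne := let E := fresh in intro E; inversion E; try lia.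
Ltac simp_ind := repeat match goal with |- context [ind ?t ?x] =>
   first [rewrite (ind_eq t x) by (try reflexivity; f_equal; lia) | rewrite (ind_ne t x) by solve_ne] end.

Section Model.
Variables p q ps : R.
Variables dbar dund M : nat.

Notation NN := (S (S M)).
Definition pi := switching dbar dund.
Definition trO s s' := trans p q ps age_orig (pi s) s s'.
Definition trT s s' := trans p q ps (age_trunc NN) (pi s) s s'.
Definition w1 k := if dbar <=? k then 1 else 0.
Definition w2 k := if dund <=? k then 1 else 0.
Definition c1 k := (1 - q) * (if dbar <=? k then 1 - ps else 1).
Definition c2 k := (1 - p) * (if dund <=? k then 1 - ps else 1).

Lemma Enext_10 age a d g : Enext p q ps age a (true,false,d) g = q * g (false,false,0%nat) + (1-q) * (if a then ps*g(true,true,0%nat) + (1-ps)*g(true,false,age d) else g(true,false,age d)).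
Proof. destruct a; unfold Enext, next, src; simpl; ring. Qed.
Lemma Enext_01 age a d g : Enext p q ps age a (false,true,d) g = p * g (true,true,0%nat) + (1-p) * (if a then ps*g(false,false,0%nat) + (1-ps)*g(false,true,age d) else g(false,true,age d)).
Proof. destruct a; unfold Enext, next, src; simpl; ring. Qed.
Lemma Enext_00 age g : Enext p q ps age false (false,false,0%nat) g = (1-p) * g (false,false,0%nat) + p * g(true,false,age 0%nat).
Proof. unfold Enext, next, src; simpl; ring. Qed.
Lemma Enext_11 age g : Enext p q ps age false (true,true,0%nat) g = q * g (false,true,age 0%nat) + (1-q) * g(true,true,0%nat).
Proof. unfold Enext, next, src; simpl; ring. Qed.

Lemma trO_00 t : trO (false,false,0%nat) t = (1-p) * ind t (false,false,0%nat) + p * ind t (true,false,1%nat).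
Proof. unfold trO, trans. apply Enext_00. Qed.
Lemma trO_11 t : trO (true,true,0%nat) t = q * ind t (false,true,1%nat) + (1-q) * ind t (true,true,0%nat).
Proof. unfold trO, trans. apply Enext_11. Qed.
Lemma trO_10 k t : trO (true,false,S k) t = q * ind t (false,false,0%nat) + (1-q) * (if dbar <=? S k then ps*ind t (true,true,0%nat) + (1-ps)*ind t (true,false,S (S k)) else ind t (true,false,S (S k))).
Proof. unfold trO, trans. rewrite Enext_10. reflexivity. Qed.
Lemma trO_01 k t : trO (false,true,S k) t = p * ind t (true,true,0%nat) + (1-p) * (if dund <=? S k then ps*ind t (false,false,0%nat) + (1-ps)*ind t (false,true,S (S k)) else ind t (false,true,S (S k))).
Proof. unfold trO, trans. rewrite Enext_01. reflexivity. Qed.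

Lemma trT_00 t : trT (false,false,0%nat) t = (1-p) * ind t (false,false,0%nat) + p * ind t (true,false,1%nat).
Proof. unfold trT, trans. rewrite Enext_00. unfold age_trunc. replace (Nat.min 1 NN) with 1%nat by lia. reflexivity. Qed.
Lemma trT_11 t : trT (true,true,0%nat) t = q * ind t (false,true,1%nat) + (1-q) * ind t (true,true,0%nat).
Proof. unfold trT, trans. rewrite Enext_11. unfold age_trunc. replace (Nat.min 1 NN) with 1%nat by lia. reflexivity. Qed.
Lemma trT_10 k t : trT (true,false,S k) t = q * ind t (false,false,0%nat) + (1-q) * (if dbar <=? S k then ps*ind t (true,true,0%nat) + (1-ps)*ind t (true,false,Nat.min (S (S k)) NN) else ind t (true,false,Nat.min (S (S k)) NN)).
Proof. unfold trT, trans. rewrite Enext_10. reflexivity. Qed.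
Lemma trT_01 k t : trT (false,true,S k) t = p * ind t (true,true,0%nat) + (1-p) * (if dund <=? S k then ps*ind t (false,false,0%nat) + (1-ps)*ind t (false,true,Nat.min (S (S k)) NN) else ind t (false,true,Nat.min (S (S k)) NN)).
Proof. unfold trT, trans. rewrite Enext_01. reflexivity. Qed.

Ltac fin := unfold w1, w2, c1, c2; repeat match goal with |- context [if ?b then _ else _] => destruct b end; ring.

Definition SO (v : state -> R) (t : state) := sum_orig (fun s => v s * trO s t).

Lemma SO_000 v : SO v (false,false,0%nat) = (1-p) * v (false,false,0%nat) + q * Series (fun k => v (true,false,S k)) + (1-p)*ps * Series (fun k => w2 (S k) * v (false,true,S k)).
Proof.
  unfold SO, sum_orig. rewrite trO_00, trO_11. simp_ind.
  rewrite <- Series_scal_l, <- (Series_scal_l ((1-p)*ps)).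
  rewrite (Series_ext _ (fun k => q * v (true, false, S k))), (Series_ext (fun k => v (false,true,S k) * _) (fun k => (1-p)*ps * (w2 (S k) * v (false, true, S k)))).
  ring.
  all: intros k; try rewrite trO_10; try rewrite trO_01; simp_ind; fin.
Qed.

Lemma SO_110 v : SO v (true,true,0%nat) = (1-q) * v (true,true,0%nat) + p * Series (fun k => v (false,true,S k)) + (1-q)*ps * Series (fun k => w1 (S k) * v (true,false,S k)).
Proof.
  unfold SO, sum_orig. rewrite trO_00, trO_11. simp_ind.
  rewrite <- Series_scal_l, <- (Series_scal_l ((1-q)*ps)).
  rewrite (Series_ext (fun k => v (true,false,S k) * _) (fun k => (1-q)*ps * (w1 (S k) * v (true, false, S k)))), (Series_ext (fun k => v (false,true,S k) * _) (fun k => p * v (false, true, S k))).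
  ring.
  all: intros k; try rewrite trO_10; try rewrite trO_01; simp_ind; fin.
Qed.

Lemma SO_10_1 v : SO v (true,false,1%nat) = p * v (false,false,0%nat).
Proof.
  unfold SO, sum_orig. rewrite trO_00, trO_11. simp_ind.
  rewrite !Series_zero. ring.
  all: intros k; try rewrite trO_10; try rewrite trO_01; simp_ind; fin.
Qed.

Lemma SO_01_1 v : SO v (false,true,1%nat) = q * v (true,true,0%nat).
Proof.
  unfold SO, sum_orig. rewrite trO_00, trO_11. simp_ind.
  rewrite !Series_zero. ring.
  all: intros k; try rewrite trO_10; try rewrite trO_01; simp_ind; fin.
Qed.

Lemma SO_10_SS v j : SO v (true,false,S (S j)) = c1 (S j) * v (true,false,S j).
Proof.
  unfold SO, sum_orig. rewrite trO_00, trO_11. simp_ind.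
  rewrite (Series_point _ j), (Series_zero (fun k => v (false,true,S k) * _)).
  rewrite trO_10; simp_ind; fin.
  all: intros k; try intros Hk; try rewrite trO_10; try rewrite trO_01; simp_ind; fin.
Qed.

Lemma SO_01_SS v j : SO v (false,true,S (S j)) = c2 (S j) * v (false,true,S j).
Proof.
  unfold SO, sum_orig. rewrite trO_00, trO_11. simp_ind.
  rewrite (Series_point (fun k => v (false,true,S k) * _) j), (Series_zero (fun k => v (true,false,S k) * _)).
  rewrite trO_01; simp_ind; fin.
  all: intros k; try intros Hk; try rewrite trO_10; try rewrite trO_01; simp_ind; fin.
Qed.

Definition ST (v : state -> R) (t : state) := sum_trunc NN (fun s => v s * trT s t).

Lemma ST_000 v : ST v (false,false,0%nat) = (1-p) * v (false,false,0%nat) + q * rsum NN (fun k => v (true,false,S k)) + (1-p)*ps * rsum NN (fun k => w2 (S k) * v (false,true,S k)).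
Proof.
  unfold ST, sum_trunc. rewrite trT_00, trT_11. simp_ind.
  rewrite <- rsum_scal, <- (rsum_scal _ ((1-p)*ps)).
  rewrite (rsum_ext _ (fun k => v (true,false,S k) * _) (fun k => q * v (true, false, S k))), (rsum_ext _ (fun k => v (false,true,S k) * _) (fun k => (1-p)*ps * (w2 (S k) * v (false, true, S k)))).
  ring.
  all: intros k Hk; try rewrite trT_10; try rewrite trT_01; simp_ind; fin.
Qed.

Lemma ST_110 v : ST v (true,true,0%nat) = (1-q) * v (true,true,0%nat) + p * rsum NN (fun k => v (false,true,S k)) + (1-q)*ps * rsum NN (fun k => w1 (S k) * v (true,false,S k)).
Proof.
  unfold ST, sum_trunc. rewrite trT_00, trT_11. simp_ind.
  rewrite <- rsum_scal, <- (rsum_scal _ ((1-q)*ps)).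
  rewrite (rsum_ext _ (fun k => v (true,false,S k) * _) (fun k => (1-q)*ps * (w1 (S k) * v (true, false, S k)))), (rsum_ext _ (fun k => v (false,true,S k) * _) (fun k => p * v (false, true, S k))).
  ring.
  all: intros k Hk; try rewrite trT_10; try rewrite trT_01; simp_ind; fin.
Qed.

Lemma ST_10_1 v : ST v (true,false,1%nat) = p * v (false,false,0%nat).
Proof.
  unfold ST, sum_trunc. rewrite trT_00, trT_11. simp_ind.
  rewrite !rsum_zero. ring.
  all: intros k Hk; try rewrite trT_10; try rewrite trT_01; simp_ind; fin.
Qed.

Lemma ST_01_1 v : ST v (false,true,1%nat) = q * v (true,true,0%nat).
Proof.
  unfold ST, sum_trunc. rewrite trT_00, trT_11. simp_ind.
  rewrite !rsum_zero. ring.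
  all: intros k Hk; try rewrite trT_10; try rewrite trT_01; simp_ind; fin.
Qed.

Lemma ST_10_SS v j : (j < M)%nat -> ST v (true,false,S (S j)) = c1 (S j) * v (true,false,S j).
Proof.
  intros Hj. unfold ST, sum_trunc. rewrite trT_00, trT_11. simp_ind.
  rewrite (rsum_point _ _ j), (rsum_zero _ (fun k => v (false,true,S k) * _)).
  rewrite trT_10; simp_ind; fin.
  all: try lia; intros k; try intros Hk; try intros Hk'; try rewrite trT_10; try rewrite trT_01; simp_ind; fin.
Qed.

Lemma ST_01_SS v j : (j < M)%nat -> ST v (false,true,S (S j)) = c2 (S j) * v (false,true,S j).
Proof.
  intros Hj. unfold ST, sum_trunc. rewrite trT_00, trT_11. simp_ind.
  rewrite (rsum_point (S (S M)) (fun k => v (false,true,S k) * _) j), (rsum_zero _ (fun k => v (true,false,S k) * _)).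
  rewrite trT_01; simp_ind; fin.
  all: try lia; intros k; try intros Hk; try intros Hk'; try rewrite trT_10; try rewrite trT_01; simp_ind; fin.
Qed.

Lemma ST_10_N v : ST v (true,false,NN) = c1 (S M) * v (true,false,S M) + c1 NN * v (true,false,NN).
Proof.
  unfold ST, sum_trunc. rewrite trT_00, trT_11. simp_ind.
  rewrite (rsum_zero _ (fun k => v (false,true,S k) * _)). cbn [rsum].
  rewrite rsum_zero. rewrite !trT_10; simp_ind. fin.
  all: intros k; try intros Hk; try rewrite trT_10; try rewrite trT_01; simp_ind; fin.
Qed.

Lemma ST_01_N v : ST v (false,true,NN) = c2 (S M) * v (false,true,S M) + c2 NN * v (false,true,NN).
Proof.
  unfold ST, sum_trunc. rewrite trT_00, trT_11. simp_ind.
  rewrite (rsum_zero _ (fun k => v (true,false,S k) * _)). cbn [rsum].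
  rewrite rsum_zero. rewrite !trT_01; simp_ind; fin.
  all: intros k; try intros Hk; try rewrite trT_10; try rewrite trT_01; simp_ind; fin.
Qed.
End Model.

End B.
Import B.

Module C.

Definition lim0 (f : nat -> R) := is_lim_seq f 0.

Lemma lim0_ext f g : (forall T, f T = g T) -> lim0 f -> lim0 g.
Proof. intros H. apply is_lim_seq_ext; auto. Qed.
Lemma lim0_plus f g : lim0 f -> lim0 g -> lim0 (fun T => f T + g T).
Proof. intros Hf Hg. unfold lim0. replace 0 with (0+0) by ring. apply is_lim_seq_plus'; auto. Qed.
Lemma lim0_scal c f : lim0 f -> lim0 (fun T => c * f T).
Proof. intros Hf. unfold lim0. replace 0 with (c*0) by ring. apply is_lim_seq_mult'; auto. apply is_lim_seq_const. Qed.
Lemma lim0_lin f g a b : lim0 f -> lim0 g -> lim0 (fun T => a * f T + b * g T).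
Proof. intros; apply lim0_plus; apply lim0_scal; auto. Qed.
Lemma lim0_const0 : lim0 (fun _ => 0).
Proof. apply is_lim_seq_const. Qed.
Lemma lim_const_eq (a b : R) : is_lim_seq (fun _ => a) b -> a = b.
Proof. intros H. apply is_lim_seq_unique in H. rewrite Lim_seq_const in H. inversion H; auto. Qed.
Lemma lim0_lim (f : nat -> R) (l : R) : is_lim_seq f l <-> lim0 (fun T => f T - l).
Proof. split; intros H.
  - unfold lim0. replace 0 with (l - l) by ring. apply is_lim_seq_minus'; auto. apply is_lim_seq_const.
  - apply (is_lim_seq_ext (fun T => (f T - l) + l)). intros; ring.
    replace (Finite l) with (Finite (0 + l)) by (f_equal; ring). apply is_lim_seq_plus'; auto. apply is_lim_seq_const.
Qed.
Lemma rsum_lim0 n (f : nat -> nat -> R) : (forall k, (k < n)%nat -> lim0 (fun T => f T k)) -> lim0 (fun T => rsum n (f T)).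
Proof. induction n; intros H; simpl. apply lim0_const0. apply lim0_plus. apply IHn; intros; apply H; lia. apply H; lia. Qed.

Lemma rsum_combo n (w a b : nat -> R) c x : rsum n (fun k => w k * (a k - c * b k * x)) = rsum n (fun k => w k * a k) - c * rsum n (fun k => w k * b k) * x.
Proof. induction n; simpl; [ring|]. rewrite IHn. ring. Qed.

Lemma sum_trunc_lin N f g a b : sum_trunc N (fun s => a * f s + b * g s) = a * sum_trunc N f + b * sum_trunc N g.
Proof. unfold sum_trunc. rewrite !rsum_plus, !rsum_scal. ring. Qed.

Section Core.
Variables p q ps : R.
Variables dbar dund M : nat.
Hypothesis hp : 0 < p < 1.
Hypothesis hq : 0 < q < 1.
Hypothesis hps : 0 < ps <= 1.
Hypothesis hdbar : (1 <= dbar <= S M)%nat.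
Hypothesis hdund : (1 <= dund <= S M)%nat.
Notation NN := (S (S M)).
Notation ST := (ST p q ps dbar dund M).
Notation c1 := (c1 q ps dbar).
Notation c2 := (c2 p ps dund).
Notation w1 := (w1 dbar).
Notation w2 := (w2 dund).

Lemma ST_lin v v' a b t : ST (fun s => a * v s + b * v' s) t = a * ST v t + b * ST v' t.
Proof. unfold B.ST. rewrite <- sum_trunc_lin. unfold sum_trunc.
  rewrite (rsum_ext _ (fun k => _ * _) (fun k => a * (v (true,false,S k) * trT p q ps dbar dund M (true,false,S k) t) + b * (v' (true,false,S k) * trT p q ps dbar dund M (true,false,S k) t))) by (intros; ring).
  rewrite (rsum_ext _ (fun k => _ * _) (fun k => a * (v (false,true,S k) * trT p q ps dbar dund M (false,true,S k) t) + b * (v' (false,true,S k) * trT p q ps dbar dund M (false,true,S k) t))) by (intros; ring).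
  ring. Qed.

Fixpoint a1 k := match k with O => 1 | S k' => c1 k * a1 k' end.
Fixpoint a2 k := match k with O => 1 | S k' => c2 k * a2 k' end.
Definition top1 := c1 (S M) / (1 - c1 NN) * a1 M.
Definition top2 := c2 (S M) / (1 - c2 NN) * a2 M.
Definition a1N k := if (k <=? M)%nat then a1 k else top1.
Definition a2N k := if (k <=? M)%nat then a2 k else top2.
Definition A1 := rsum NN a1N.
Definition A2 := rsum NN a2N.
Definition W1 := rsum NN (fun k => w1 (S k) * a1N k).
Definition W2 := rsum NN (fun k => w2 (S k) * a2N k).
Definition alpha := p - q * p * A1.
Definition beta := (1-p) * ps * q * W2.
Definition gam := 1 + p * A1.
Definition del := 1 + q * A2.

Lemma c1NN : c1 NN = (1-q)*(1-ps).
Proof. unfold B.c1. destruct (Nat.leb_spec dbar NN); [ring|lia]. Qed.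
Lemma c2NN : c2 NN = (1-p)*(1-ps).
Proof. unfold B.c2. destruct (Nat.leb_spec dund NN); [ring|lia]. Qed.
Lemma c1NN_lt : 1 - c1 NN > 0.
Proof. rewrite c1NN. nra. Qed.
Lemma c2NN_lt : 1 - c2 NN > 0.
Proof. rewrite c2NN. nra. Qed.

Definition valid10 k := in_trunc NN (true,false,S k).

Section U.
Variable u : nat -> state -> R.
Variable s0 : R.
Hypothesis Hres : forall t, in_trunc NN t -> lim0 (fun T => u T t - ST (u T) t).
Hypothesis Hsum : is_lim_seq (fun T => sum_trunc NN (u T)) s0.
Let X T := u T (false,false,0%nat).
Let Y T := u T (true,true,0%nat).

Lemma in10 k : (1 <= k <= NN)%nat -> in_trunc NN (true,false,k).
Proof. intros. right; right. exists k. split; auto. Qed.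
Lemma in01 k : (1 <= k <= NN)%nat -> in_trunc NN (false,true,k).
Proof. intros. right; right. exists k. split; auto. Qed.

Lemma rep1 k : (k <= M)%nat -> lim0 (fun T => u T (true,false,S k) - p * a1 k * X T).
Proof.
  induction k; intros Hk.
  - eapply lim0_ext; [|apply (Hres (true,false,1%nat) (in10 1 ltac:(lia)))]. intros T. cbv beta. simpl.
    rewrite ST_10_1. unfold X. ring.
  - eapply lim0_ext; [|apply (lim0_lin _ _ 1 (c1 (S k)) (Hres _ (in10 (S (S k)) ltac:(lia))) (IHk ltac:(lia)))].
    intros T. cbv beta. rewrite ST_10_SS by lia. simpl a1. unfold X. ring.
Qed.
Lemma rep2 k : (k <= M)%nat -> lim0 (fun T => u T (false,true,S k) - q * a2 k * Y T).
Proof.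
  induction k; intros Hk.
  - eapply lim0_ext; [|apply (Hres (false,true,1%nat) (in01 1 ltac:(lia)))]. intros T. cbv beta. simpl.
    rewrite ST_01_1. unfold Y. ring.
  - eapply lim0_ext; [|apply (lim0_lin _ _ 1 (c2 (S k)) (Hres _ (in01 (S (S k)) ltac:(lia))) (IHk ltac:(lia)))].
    intros T. cbv beta. rewrite ST_01_SS by lia. simpl a2. unfold Y. ring.
Qed.
Lemma rep1N k : (k < NN)%nat -> lim0 (fun T => u T (true,false,S k) - p * a1N k * X T).
Proof.
  intros Hk. unfold a1N. destruct (Nat.leb_spec k M). apply rep1; auto.
  assert (k = S M) by lia. subst k.
  pose proof c1NN_lt.
  eapply lim0_ext; [|apply (lim0_lin _ _ (/(1 - c1 NN)) (c1 (S M) / (1 - c1 NN)) (Hres _ (in10 NN ltac:(lia))) (rep1 M ltac:(lia)))].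
  intros T. cbv beta. rewrite ST_10_N. unfold top1, X. field. lra.
Qed.
Lemma rep2N k : (k < NN)%nat -> lim0 (fun T => u T (false,true,S k) - q * a2N k * Y T).
Proof.
  intros Hk. unfold a2N. destruct (Nat.leb_spec k M). apply rep2; auto.
  assert (k = S M) by lia. subst k.
  pose proof c2NN_lt.
  eapply lim0_ext; [|apply (lim0_lin _ _ (/(1 - c2 NN)) (c2 (S M) / (1 - c2 NN)) (Hres _ (in01 NN ltac:(lia))) (rep2 M ltac:(lia)))].
  intros T. cbv beta. rewrite ST_01_N. unfold top2, Y. field. lra.
Qed.

Lemma mass1 (w : nat -> R) : lim0 (fun T => rsum NN (fun k => w k * u T (true,false,S k)) - p * rsum NN (fun k => w k * a1N k) * X T).
Proof.
  eapply lim0_ext; [|apply (rsum_lim0 NN (fun T k => w k * (u T (true,false,S k) - p * a1N k * X T)))].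
  - intros T. cbv beta. apply rsum_combo.
  - intros k Hk. apply lim0_scal. apply rep1N; auto.
Qed.
Lemma mass2 (w : nat -> R) : lim0 (fun T => rsum NN (fun k => w k * u T (false,true,S k)) - q * rsum NN (fun k => w k * a2N k) * Y T).
Proof.
  eapply lim0_ext; [|apply (rsum_lim0 NN (fun T k => w k * (u T (false,true,S k) - q * a2N k * Y T)))].
  - intros T. cbv beta. apply rsum_combo.
  - intros k Hk. apply lim0_scal. apply rep2N; auto.
Qed.

Lemma eqA : lim0 (fun T => alpha * X T - beta * Y T).
Proof.
  pose proof (Hres (false,false,0%nat) ltac:(left; reflexivity)) as H0.
  pose proof (mass1 (fun _ => 1)) as H1. pose proof (mass2 (fun k => w2 (S k))) as H2.
  eapply lim0_ext; [|apply (lim0_plus _ _ H0 (lim0_lin _ _ q ((1-p)*ps) H1 H2))].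
  intros T. cbv beta. rewrite ST_000. unfold alpha, beta, A1, W2, X, Y.
  rewrite (rsum_ext _ (fun k => 1 * u T (true,false,S k)) (fun k => u T (true,false,S k))) by (intros; ring).
  rewrite (rsum_ext _ (fun k => 1 * a1N k) a1N) by (intros; ring). ring.
Qed.

Lemma eqB : is_lim_seq (fun T => gam * X T + del * Y T) s0.
Proof.
  apply lim0_lim. apply lim0_lim in Hsum.
  pose proof (mass1 (fun _ => 1)) as H1. pose proof (mass2 (fun _ => 1)) as H2.
  eapply lim0_ext; [|apply (lim0_plus _ _ Hsum (lim0_lin _ _ (-1) (-1) H1 H2))].
  intros T. cbv beta. unfold sum_trunc, gam, del, A1, A2, X, Y.
  rewrite (rsum_ext _ (fun k => 1 * u T (true,false,S k)) (fun k => u T (true,false,S k))) by (intros; ring).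
  rewrite (rsum_ext _ (fun k => 1 * a1N k) a1N) by (intros; ring).
  rewrite (rsum_ext _ (fun k => 1 * u T (false,true,S k)) (fun k => u T (false,true,S k))) by (intros; ring).
  rewrite (rsum_ext _ (fun k => 1 * a2N k) a2N) by (intros; ring). ring.
Qed.
End U.

Lemma c1_pos k : 0 <= c1 k.
Proof. unfold B.c1. destruct (dbar <=? k); nra. Qed.
Lemma c2_pos k : 0 <= c2 k.
Proof. unfold B.c2. destruct (dund <=? k); nra. Qed.
Lemma a1_pos k : 0 <= a1 k.
Proof. induction k; simpl. lra. pose proof (c1_pos (S k)). nra. Qed.
Lemma a2_pos k : 0 <= a2 k.
Proof. induction k; simpl. lra. pose proof (c2_pos (S k)). nra. Qed.
Lemma a1N_pos k : 0 <= a1N k.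
Proof. unfold a1N, top1. destruct (k <=? M). apply a1_pos. pose proof c1NN_lt. pose proof (c1_pos (S M)). pose proof (a1_pos M).
  apply Rmult_le_pos; auto. apply Rdiv_le_0_compat; lra. Qed.
Lemma a2N_pos k : 0 <= a2N k.
Proof. unfold a2N, top2. destruct (k <=? M). apply a2_pos. pose proof c2NN_lt. pose proof (c2_pos (S M)). pose proof (a2_pos M).
  apply Rmult_le_pos; auto. apply Rdiv_le_0_compat; lra. Qed.
Lemma a2_spos k : (k < dund)%nat -> 0 < a2 k.
Proof. induction k; intros H; simpl. lra. unfold B.c2. destruct (Nat.leb_spec dund (S k)). lia.
  pose proof (IHk ltac:(lia)). nra. Qed.
Lemma A1_pos : 0 <= A1.
Proof. apply rsum_nonneg. intros; apply a1N_pos. Qed.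
Lemma A2_pos : 0 <= A2.
Proof. apply rsum_nonneg. intros; apply a2N_pos. Qed.
Lemma W2_pos : 0 < W2.
Proof.
  unfold W2. eapply Rlt_le_trans; [|apply (rsum_ge_term _ _ (dund - 1))].
  - unfold w2, a2N. replace (S (dund - 1)) with dund by lia. rewrite Nat.leb_refl.
    destruct (Nat.leb_spec (dund - 1) M); [|lia]. pose proof (a2_spos (dund-1) ltac:(lia)). lra.
  - lia.
  - intros k _. unfold w2. pose proof (a2N_pos k). destruct (dund <=? S k); lra.
Qed.

Lemma conv (nu : state -> R) (v : nat -> state -> R) :
  (forall s, in_trunc NN s -> 0 <= nu s) -> sum_trunc NN nu = 1 ->
  (forall t, in_trunc NN t -> nu t = ST nu t) ->
  (forall t, in_trunc NN t -> lim0 (fun T => v T t - ST (v T) t)) ->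
  (forall T, sum_trunc NN (v T) = 1) ->
  forall s, in_trunc NN s -> is_lim_seq (fun T => v T s) (nu s).
Proof.
  intros Hnn Hn1 Hst Hres Hsum.
  assert (HA : alpha * nu (false,false,0%nat) = beta * nu (true,true,0%nat)).
  { pose proof (eqA (fun _ => nu) ltac:(intros t Ht; eapply lim0_ext; [|apply lim0_const0]; intros T; simpl; rewrite <- Hst; auto; ring)) as H.
    unfold lim0 in H; cbv beta in H. apply lim_const_eq in H. lra. }
  assert (HB : gam * nu (false,false,0%nat) + del * nu (true,true,0%nat) = 1).
  { pose proof (eqB (fun _ => nu) 1 ltac:(intros t Ht; eapply lim0_ext; [|apply lim0_const0]; intros T; simpl; rewrite <- Hst; auto; ring) ltac:(eapply is_lim_seq_ext; [|apply is_lim_seq_const]; intros; cbv beta; rewrite Hn1; reflexivity)) as H.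
    unfold lim0 in H; cbv beta in H. apply lim_const_eq in H. auto. }
  pose proof (Hnn _ (or_introl eq_refl)) as Hx0.
  pose proof (Hnn _ (or_intror (or_introl eq_refl))) as Hy0.
  pose proof W2_pos. pose proof A1_pos. pose proof A2_pos.
  assert (Hb : beta > 0) by (unfold beta; apply Rmult_lt_0_compat; [|lra]; apply Rmult_lt_0_compat; [|lra]; apply Rmult_lt_0_compat; lra).
  assert (Hg : gam > 0) by (unfold gam; nra).
  assert (Hd : del > 0) by (unfold del; nra).
  assert (Hdet : alpha * del + beta * gam > 0).
  { destruct (Rle_lt_or_eq_dec 0 _ Hx0) as [Hx|Hx].
    - assert (alpha >= 0) by nra. nra.
    - rewrite <- Hx in HA, HB. assert (nu (true,true,0%nat) = 0) by nra. rewrite H2 in HB. lra. }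
  set (u := fun T s => 1 * v T s + (-1) * nu s).
  assert (Hres' : forall t, in_trunc NN t -> lim0 (fun T => u T t - ST (u T) t)).
  { intros t Ht. eapply lim0_ext; [|apply (Hres t Ht)]. intros T. cbv beta. unfold u. rewrite ST_lin. rewrite <- Hst by auto. ring. }
  assert (Hsum' : is_lim_seq (fun T => sum_trunc NN (u T)) 0).
  { eapply is_lim_seq_ext; [|apply is_lim_seq_const]. intros T. unfold u. rewrite sum_trunc_lin, Hsum, Hn1. ring. }
  pose proof (eqA u Hres') as E1. pose proof (eqB u 0 Hres' Hsum') as E2. apply lim0_lim in E2.
  set (X := fun T => u T (false,false,0%nat)) in *. set (Y := fun T => u T (true,true,0%nat)) in *.
  assert (HX : lim0 X).
  { eapply lim0_ext; [|apply (lim0_lin _ _ (del / (alpha * del + beta * gam)) (beta / (alpha * del + beta * gam)) E1 E2)].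
    intros T. cbv beta. unfold X, Y. field. lra. }
  assert (HY : lim0 Y).
  { eapply lim0_ext; [|apply (lim0_lin _ _ (- gam / (alpha * del + beta * gam)) (alpha / (alpha * del + beta * gam)) E1 E2)].
    intros T. cbv beta. unfold X, Y. field. lra. }
  intros s Hs. apply lim0_lim.
  destruct Hs as [->|[->|[d [Hd' [->| ->]]]]].
  - eapply lim0_ext; [|apply HX]. intros T. unfold X, u. ring.
  - eapply lim0_ext; [|apply HY]. intros T. unfold Y, u. ring.
  - destruct d as [|k]; [lia|].
    eapply lim0_ext; [|apply (lim0_lin _ _ 1 (p * a1N k) (rep1N u Hres' k ltac:(lia)) HX)]. intros T. cbv beta. unfold X, u. ring.
  - destruct d as [|k]; [lia|].
    eapply lim0_ext; [|apply (lim0_lin _ _ 1 (q * a2N k) (rep2N u Hres' k ltac:(lia)) HY)]. intros T. cbv beta. unfold Y, u. ring.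
Qed.
End Core.

End C.
Import C.

Module D.

Lemma Series_nonneg a : (forall k, 0 <= a k) -> ex_series a -> 0 <= Series a.
Proof. intros H He. rewrite <- (Series_zero (fun _ => 0)) by auto. apply Series_le; auto. intros; split; auto; lra. Qed.

Lemma sum_trunc_ext N f g : (forall s, in_trunc N s -> f s = g s) -> sum_trunc N f = sum_trunc N g.
Proof.
  intros H. unfold sum_trunc. rewrite (H (false,false,0%nat)), (H (true,true,0%nat)) by ((left; reflexivity) || (right; left; reflexivity)).
  rewrite (rsum_ext N (fun k => f (true,false,S k)) (fun k => g (true,false,S k))).
  rewrite (rsum_ext N (fun k => f (false,true,S k)) (fun k => g (false,true,S k))). reflexivity.
  all: intros k Hk; apply H; right; right; exists (S k); split; [lia|auto].
Qed.

Lemma sum_trunc_nonneg N f : (forall s, in_trunc N s -> 0 <= f s) -> 0 <= sum_trunc N f.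
Proof.
  intros H. unfold sum_trunc.
  pose proof (H (false,false,0%nat) ltac:(left; reflexivity)). pose proof (H (true,true,0%nat) ltac:(right; left; reflexivity)).
  pose proof (rsum_nonneg N (fun k => f (true,false,S k)) ltac:(intros k Hk; apply H; right; right; exists (S k); split; [lia|auto])).
  pose proof (rsum_nonneg N (fun k => f (false,true,S k)) ltac:(intros k Hk; apply H; right; right; exists (S k); split; [lia|auto])).
  lra.
Qed.

Lemma sum_trunc_ge N f s : (forall s, in_trunc N s -> 0 <= f s) -> in_trunc N s -> f s <= sum_trunc N f.
Proof.
  intros H Hs. unfold sum_trunc.
  pose proof (H (false,false,0%nat) ltac:(left; reflexivity)). pose proof (H (true,true,0%nat) ltac:(right; left; reflexivity)).
  pose proof (rsum_nonneg N (fun k => f (true,false,S k)) ltac:(intros k Hk; apply H; right; right; exists (S k); split; [lia|auto])).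
  pose proof (rsum_nonneg N (fun k => f (false,true,S k)) ltac:(intros k Hk; apply H; right; right; exists (S k); split; [lia|auto])).
  destruct Hs as [->|[->|[d [Hd [->| ->]]]]]; try lra; destruct d as [|k]; try lia.
  - pose proof (rsum_ge_term N (fun k => f (true,false,S k)) k ltac:(lia) ltac:(intros k' Hk; apply H; right; right; exists (S k'); split; [lia|auto])). lra.
  - pose proof (rsum_ge_term N (fun k => f (false,true,S k)) k ltac:(lia) ltac:(intros k' Hk; apply H; right; right; exists (S k'); split; [lia|auto])). lra.
Qed.

Section Lump.
Variables p q ps : R.
Variables dbar dund M : nat.
Hypothesis hp : 0 < p < 1.
Hypothesis hq : 0 < q < 1.
Hypothesis hps : 0 < ps <= 1.
Hypothesis hdbar : (1 <= dbar <= S M)%nat.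
Hypothesis hdund : (1 <= dund <= S M)%nat.
Notation NN := (S (S M)).
Notation ST := (ST p q ps dbar dund M).
Notation SO := (SO p q ps dbar dund).
Notation c1 := (c1 q ps dbar).
Notation c2 := (c2 p ps dund).
Notation w1 := (w1 dbar).
Notation w2 := (w2 dund).

Definition lumpO (v : state -> R) (s : state) : R :=
  match s with
  | (true, false, d) => if (d =? NN)%nat then Series (fun j => v (true,false,NN + j)%nat) else v s
  | (false, true, d) => if (d =? NN)%nat then Series (fun j => v (false,true,NN + j)%nat) else v s
  | _ => v s
  end.

Lemma c1_tail j : c1 (S (M + j)) = c1 NN.
Proof. unfold B.c1. destruct (Nat.leb_spec dbar (S (M+j))), (Nat.leb_spec dbar NN); try lia; ring. Qed.
Lemma c2_tail j : c2 (S (M + j)) = c2 NN.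
Proof. unfold B.c2. destruct (Nat.leb_spec dund (S (M+j))), (Nat.leb_spec dund NN); try lia; ring. Qed.

Lemma ex_w2 (v : nat -> R) : ex_series v -> ex_series (fun k => w2 (S k) * v k).
Proof.
  intros H. apply (ex_series_incr_n _ dund). apply (ex_series_incr_n _ dund) in H.
  eapply ex_series_ext; [|apply H]. intros k. simpl. unfold w2. destruct (Nat.leb_spec dund (S (dund + k))); [ring|lia].
Qed.
Lemma ex_w1 (v : nat -> R) : ex_series v -> ex_series (fun k => w1 (S k) * v k).
Proof.
  intros H. apply (ex_series_incr_n _ dbar). apply (ex_series_incr_n _ dbar) in H.
  eapply ex_series_ext; [|apply H]. intros k. simpl. unfold w1. destruct (Nat.leb_spec dbar (S (dbar + k))); [ring|lia].
Qed.

Lemma lump_rsum10 v : ex_series (fun k => v (true,false,S k)) ->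
  rsum NN (fun k => lumpO v (true,false,S k)) = Series (fun k => v (true,false,S k)).
Proof.
  intros H. rewrite (Series_split _ (S M)) by auto.
  change (rsum (S M) (fun k => lumpO v (true,false,S k)) + lumpO v (true,false,NN) = rsum (S M) (fun k => v (true, false, S k)) + Series (fun k => v (true, false, S (S M + k)))).
  f_equal. apply rsum_ext. intros k Hk. simpl. destruct (Nat.eqb_spec k (S M)); [lia|reflexivity].
  simpl. rewrite Nat.eqb_refl. reflexivity.
Qed.
Lemma lump_rsum01 v : ex_series (fun k => v (false,true,S k)) ->
  rsum NN (fun k => lumpO v (false,true,S k)) = Series (fun k => v (false,true,S k)).
Proof.
  intros H. rewrite (Series_split _ (S M)) by auto.
  change (rsum (S M) (fun k => lumpO v (false,true,S k)) + lumpO v (false,true,NN) = rsum (S M) (fun k => v (false,true, S k)) + Series (fun k => v (false,true, S (S M + k)))).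
  f_equal. apply rsum_ext. intros k Hk. simpl. destruct (Nat.eqb_spec k (S M)); [lia|reflexivity].
  simpl. rewrite Nat.eqb_refl. reflexivity.
Qed.
Lemma lump_rsumw2 v : ex_series (fun k => v (false,true,S k)) ->
  rsum NN (fun k => w2 (S k) * lumpO v (false,true,S k)) = Series (fun k => w2 (S k) * v (false,true,S k)).
Proof.
  intros H. rewrite (Series_split _ (S M)) by (apply ex_w2; auto).
  change (rsum (S M) (fun k => w2 (S k) * lumpO v (false,true,S k)) + w2 NN * lumpO v (false,true,NN) = rsum (S M) (fun k => w2 (S k) * v (false,true, S k)) + Series (fun k => w2 (S (S M + k)) * v (false,true, S (S M + k)))).
  f_equal. apply rsum_ext. intros k Hk. simpl. destruct (Nat.eqb_spec k (S M)); [lia|reflexivity].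
  simpl. rewrite Nat.eqb_refl. rewrite <- Series_scal_l. apply Series_ext. intros j. unfold w2.
  destruct (Nat.leb_spec dund (S (S (M + j)))), (Nat.leb_spec dund (S (S M))); try lia; reflexivity.
Qed.
Lemma lump_rsumw1 v : ex_series (fun k => v (true,false,S k)) ->
  rsum NN (fun k => w1 (S k) * lumpO v (true,false,S k)) = Series (fun k => w1 (S k) * v (true,false,S k)).
Proof.
  intros H. rewrite (Series_split _ (S M)) by (apply ex_w1; auto).
  change (rsum (S M) (fun k => w1 (S k) * lumpO v (true,false,S k)) + w1 NN * lumpO v (true,false,NN) = rsum (S M) (fun k => w1 (S k) * v (true,false, S k)) + Series (fun k => w1 (S (S M + k)) * v (true,false, S (S M + k)))).
  f_equal. apply rsum_ext. intros k Hk. simpl. destruct (Nat.eqb_spec k (S M)); [lia|reflexivity].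
  simpl. rewrite Nat.eqb_refl. rewrite <- Series_scal_l. apply Series_ext. intros j. unfold w1.
  destruct (Nat.leb_spec dbar (S (S (M + j)))), (Nat.leb_spec dbar (S (S M))); try lia; reflexivity.
Qed.

Lemma c1SM : c1 (S M) = c1 NN.
Proof. unfold B.c1. destruct (Nat.leb_spec dbar (S M)), (Nat.leb_spec dbar NN); try lia; ring. Qed.
Lemma c2SM : c2 (S M) = c2 NN.
Proof. unfold B.c2. destruct (Nat.leb_spec dund (S M)), (Nat.leb_spec dund NN); try lia; ring. Qed.

Definition summ (v : state -> R) := ex_series (fun k => v (true,false,S k)) /\ ex_series (fun k => v (false,true,S k)).

Lemma top10 v : ex_series (fun k => v (true,false,S k)) ->
  Series (fun j => SO v (true,false,NN + j)%nat) = c1 NN * (v (true,false,S M) + Series (fun j => v (true,false,NN+j)%nat)).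
Proof.
  intros H. rewrite (Series_ext _ (fun j => c1 NN * v (true,false,S (M + j)))).
  2:{ intros j. change (NN + j)%nat with (S (S (M + j))). rewrite SO_10_SS, c1_tail. reflexivity. }
  rewrite Series_scal_l. f_equal. rewrite Series_incr_1.
  - rewrite Nat.add_0_r. f_equal. apply Series_ext. intros j. do 3 f_equal. lia.
  - apply (ex_series_incr_n (fun k => v (true,false,S k)) M) in H. exact H.
Qed.
Lemma top01 v : ex_series (fun k => v (false,true,S k)) ->
  Series (fun j => SO v (false,true,NN + j)%nat) = c2 NN * (v (false,true,S M) + Series (fun j => v (false,true,NN+j)%nat)).
Proof.
  intros H. rewrite (Series_ext _ (fun j => c2 NN * v (false,true,S (M + j)))).
  2:{ intros j. change (NN + j)%nat with (S (S (M + j))). rewrite SO_01_SS, c2_tail. reflexivity. }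
  rewrite Series_scal_l. f_equal. rewrite Series_incr_1.
  - rewrite Nat.add_0_r. f_equal. apply Series_ext. intros j. do 3 f_equal. lia.
  - apply (ex_series_incr_n (fun k => v (false,true,S k)) M) in H. exact H.
Qed.

Lemma lump_comm v t : summ v -> in_trunc NN t -> ST (lumpO v) t = lumpO (SO v) t.
Proof.
  intros [H1 H2] Ht. destruct Ht as [->|[->|[d [Hd [->| ->]]]]].
  - rewrite ST_000. change (lumpO ?w (false,false,0%nat)) with (w (false,false,0%nat)). rewrite lump_rsum10, lump_rsumw2 by auto. rewrite SO_000. reflexivity.
  - rewrite ST_110. change (lumpO ?w (true,true,0%nat)) with (w (true,true,0%nat)). rewrite lump_rsum01, lump_rsumw1 by auto. rewrite SO_110. reflexivity.
  - destruct d as [|[|j]]; [lia| |].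
    + rewrite ST_10_1. simpl lumpO. rewrite SO_10_1. reflexivity.
    + destruct (Nat.eq_dec j M) as [->|Hj].
      * rewrite ST_10_N. simpl lumpO. rewrite !Nat.eqb_refl. rewrite top10 by auto.
        replace (M =? S M)%nat with false by (symmetry; apply Nat.eqb_neq; lia). rewrite c1SM. rewrite Rmult_plus_distr_l. reflexivity.
      * rewrite ST_10_SS by lia. simpl lumpO.
        replace (j =? M)%nat with false by (symmetry; apply Nat.eqb_neq; lia).
        replace (j =? S M)%nat with false by (symmetry; apply Nat.eqb_neq; lia).
        rewrite SO_10_SS. reflexivity.
  - destruct d as [|[|j]]; [lia| |].
    + rewrite ST_01_1. simpl lumpO. rewrite SO_01_1. reflexivity.
    + destruct (Nat.eq_dec j M) as [->|Hj].
      * rewrite ST_01_N. simpl lumpO. rewrite !Nat.eqb_refl. rewrite top01 by auto.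
        replace (M =? S M)%nat with false by (symmetry; apply Nat.eqb_neq; lia). rewrite c2SM. rewrite Rmult_plus_distr_l. reflexivity.
      * rewrite ST_01_SS by lia. simpl lumpO.
        replace (j =? M)%nat with false by (symmetry; apply Nat.eqb_neq; lia).
        replace (j =? S M)%nat with false by (symmetry; apply Nat.eqb_neq; lia).
        rewrite SO_01_SS. reflexivity.
Qed.
End Lump.

End D.
Import D.

Module E.

Section Stat.
Variables p q ps : R.
Variables dbar dund M : nat.
Hypothesis hp : 0 < p < 1.
Hypothesis hq : 0 < q < 1.
Hypothesis hps : 0 < ps <= 1.
Hypothesis hdbar : (1 <= dbar <= S M)%nat.
Hypothesis hdund : (1 <= dund <= S M)%nat.
Notation NN := (S (S M)).
Notation ST := (ST p q ps dbar dund M).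
Notation SO := (SO p q ps dbar dund).
Notation c1 := (c1 q ps dbar).
Notation c2 := (c2 p ps dund).
Notation lumpO := (lumpO M).

Variable nu : state -> R.
Hypothesis Hnu : stationary_orig p q ps dbar dund nu.

Lemma nu_fix t : in_orig t -> SO nu t = nu t.
Proof. intros Ht. destruct Hnu as [_ [_ [_ H]]]. symmetry. apply H; auto. Qed.

Lemma in_orig_10 d : (1 <= d)%nat -> in_orig (true,false,d).
Proof. intros. right; right. exists d. auto. Qed.
Lemma in_orig_01 d : (1 <= d)%nat -> in_orig (false,true,d).
Proof. intros. right; right. exists d. auto. Qed.

Lemma lump_nu_fix t : in_trunc NN t -> lumpO (SO nu) t = lumpO nu t.
Proof.
  intros Ht. destruct Ht as [->|[->|[d [Hd [->| ->]]]]].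
  - apply nu_fix. left; reflexivity.
  - apply nu_fix. right; left; reflexivity.
  - simpl. destruct (d =? S (S M))%nat. apply Series_ext. intros j. apply nu_fix, in_orig_10. lia. apply nu_fix, in_orig_10; lia.
  - simpl. destruct (d =? S (S M))%nat. apply Series_ext. intros j. apply nu_fix, in_orig_01. lia. apply nu_fix, in_orig_01; lia.
Qed.

Lemma lump_nu_stat t : in_trunc NN t -> lumpO nu t = ST (lumpO nu) t.
Proof.
  intros Ht. rewrite (lump_comm p q ps dbar dund M hdbar hdund) by (auto; destruct Hnu as [_ [H _]]; exact H). symmetry. apply lump_nu_fix; auto.
Qed.

Lemma lump_nu_nonneg s : in_trunc NN s -> 0 <= lumpO nu s.
Proof.
  destruct Hnu as [Hnn [[H1 H2] _]].
  intros Ht. destruct Ht as [->|[->|[d [Hd [->| ->]]]]].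
  - apply Hnn. left; reflexivity.
  - apply Hnn. right; left; reflexivity.
  - simpl. destruct (d =? S (S M))%nat. apply Series_nonneg. intros j. apply Hnn, in_orig_10. lia.
    apply (ex_series_incr_n _ (S M)) in H1. exact H1. apply Hnn, in_orig_10; lia.
  - simpl. destruct (d =? S (S M))%nat. apply Series_nonneg. intros j. apply Hnn, in_orig_01. lia.
    apply (ex_series_incr_n _ (S M)) in H2. exact H2. apply Hnn, in_orig_01; lia.
Qed.

Lemma lump_nu_sum : sum_trunc NN (lumpO nu) = 1.
Proof.
  destruct Hnu as [_ [[H1 H2] [Hs _]]]. rewrite <- Hs. unfold sum_trunc, sum_orig.
  rewrite (lump_rsum10 dbar dund M hdbar hdund), (lump_rsum01 dbar dund M hdbar hdund) by auto. reflexivity.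
Qed.

Lemma nuN_eq (nuN : state -> R) : stationary_trunc p q ps NN dbar dund nuN ->
  forall s, in_trunc NN s -> nuN s = lumpO nu s.
Proof.
  intros [Hnn [Hs Hst]] s Hs'.
  assert (H := conv p q ps dbar dund M hp hq hps hdbar hdund (lumpO nu) (fun _ => nuN) lump_nu_nonneg lump_nu_sum lump_nu_stat
     ltac:(intros t Ht; eapply lim0_ext; [|apply lim0_const0]; intros T; cbv beta; unfold B.ST, trT, pi; rewrite <- (Hst t Ht); ring)
     ltac:(intros; exact Hs) s Hs').
  apply lim_const_eq in H. exact H.
Qed.

Lemma nu_top10 : Series (fun j => nu (true,false,NN + j)%nat) = c1 NN / (1 - c1 NN) * nu (true,false,S M).
Proof.
  destruct Hnu as [_ [[H1 H2] _]].
  pose proof (top10 p q ps dbar dund M hdbar hdund nu H1) as T.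
  rewrite (Series_ext _ (fun j => nu (true,false,NN+j)%nat)) in T by (intros; apply nu_fix, in_orig_10; lia).
  pose proof (c1NN_lt q ps dbar dund M hq hps hdbar hdund).
  apply (Rmult_eq_reg_l (1 - c1 NN)); [|lra]. field_simplify; [|lra]. lra.
Qed.
Lemma nu_top01 : Series (fun j => nu (false,true,NN + j)%nat) = c2 NN / (1 - c2 NN) * nu (false,true,S M).
Proof.
  destruct Hnu as [_ [[H1 H2] _]].
  pose proof (top01 p q ps dbar dund M hdbar hdund nu H2) as T.
  rewrite (Series_ext _ (fun j => nu (false,true,NN+j)%nat)) in T by (intros; apply nu_fix, in_orig_01; lia).
  pose proof (c2NN_lt p q ps dbar dund M hp hq hps hdbar hdund).
  apply (Rmult_eq_reg_l (1 - c2 NN)); [|lra]. field_simplify; [|lra]. lra.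
Qed.

Lemma nu_10 k : nu (true,false,S k) = p * (1-q)^k * (1-ps)^(S k - dbar) * nu (false,false,0%nat).
Proof.
  induction k.
  - rewrite <- nu_fix by (apply in_orig_10; lia). rewrite SO_10_1.
    replace (1 - dbar)%nat with 0%nat by lia. simpl. ring.
  - rewrite <- nu_fix by (apply in_orig_10; lia). rewrite SO_10_SS, IHk. unfold B.c1.
    destruct (Nat.leb_spec dbar (S k)).
    + replace (S (S k) - dbar)%nat with (S (S k - dbar)) by lia. simpl. ring.
    + replace (S (S k) - dbar)%nat with 0%nat by lia. replace (S k - dbar)%nat with 0%nat by lia. simpl. ring.
Qed.
Lemma nu_01 k : nu (false,true,S k) = q * (1-p)^k * (1-ps)^(S k - dund) * nu (true,true,0%nat).
Proof.
  induction k.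
  - rewrite <- nu_fix by (apply in_orig_01; lia). rewrite SO_01_1.
    replace (1 - dund)%nat with 0%nat by lia. simpl. ring.
  - rewrite <- nu_fix by (apply in_orig_01; lia). rewrite SO_01_SS, IHk. unfold B.c2.
    destruct (Nat.leb_spec dund (S k)).
    + replace (S (S k) - dund)%nat with (S (S k - dund)) by lia. simpl. ring.
    + replace (S (S k) - dund)%nat with 0%nat by lia. replace (S k - dund)%nat with 0%nat by lia. simpl. ring.
Qed.
End Stat.

End E.
Import E.

Module F.

Section Dist.
Variables p q ps : R.
Variables dbar dund M : nat.
Hypothesis hp : 0 < p < 1.
Hypothesis hq : 0 < q < 1.
Hypothesis hps : 0 < ps <= 1.
Hypothesis hdbar : (1 <= dbar <= S M)%nat.
Hypothesis hdund : (1 <= dund <= S M)%nat.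
Notation NN := (S (S M)).
Notation ST := (ST p q ps dbar dund M).
Notation SO := (SO p q ps dbar dund).
Notation c1 := (c1 q ps dbar).
Notation c2 := (c2 p ps dund).
Notation w1 := (w1 dbar).
Notation w2 := (w2 dund).
Notation lumpO := (lumpO M).

Definition dO := dist sum_orig (fun s s' => trans p q ps age_orig (switching dbar dund s) s s').
Definition dT := dist (sum_trunc NN) (fun s s' => trans p q ps (age_trunc NN) (switching dbar dund s) s s').

Lemma dO_S t s : dO (S t) s = SO (dO t) s.
Proof. reflexivity. Qed.
Lemma dT_S t s : dT (S t) s = ST (dT t) s.
Proof. reflexivity. Qed.

Lemma dO_supp t k : (t <= k)%nat -> dO t (true,false,S k) = 0 /\ dO t (false,true,S k) = 0.
Proof.
  revert k. induction t; intros k Hk.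
  - simpl. split; apply ind_ne; solve_ne.
  - destruct k as [|k]; [lia|]. rewrite !dO_S, SO_10_SS, SO_01_SS. destruct (IHt k ltac:(lia)) as [-> ->]. split; ring.
Qed.

Lemma dO_summ t : summ (dO t).
Proof. split; apply (ex_series_fin _ t); intros k Hk; apply dO_supp; auto. Qed.

Lemma dT_lump t s : in_trunc NN s -> dT t s = lumpO (dO t) s.
Proof.
  revert s. induction t; intros s Hs.
  - destruct Hs as [->|[->|[d [Hd [->| ->]]]]]; try reflexivity; unfold lumpO;
    destruct (Nat.eqb_spec d NN); try reflexivity;
    (rewrite Series_zero by (intros; apply ind_ne; solve_ne)); apply ind_ne; solve_ne.
  - rewrite dT_S. unfold B.ST. rewrite (sum_trunc_ext _ _ (fun s0 => lumpO (dO t) s0 * trT p q ps dbar dund M s0 s)).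
    + change (ST (lumpO (dO t)) s = lumpO (dO (S t)) s). rewrite (lump_comm p q ps dbar dund M hdbar hdund) by (auto; apply dO_summ).
      reflexivity.
    + intros s0 Hs0. rewrite IHt; auto.
Qed.

Lemma trT_nonneg s t : 0 <= trT p q ps dbar dund M s t.
Proof.
  assert (Hi : forall a b, 0 <= ind a b) by (intros; unfold ind; destruct state_eqb; lra).
  destruct s as [[x xh] d]; unfold trT, trans, Enext.
  destruct (pi dbar dund (x,xh,d)); destruct x, xh; unfold src;
  repeat (first [apply Hi | lra | apply Rplus_le_le_0_compat | apply Rmult_le_pos]).
Qed.

Lemma ST_nonneg v t : (forall s, in_trunc NN s -> 0 <= v s) -> 0 <= ST v t.
Proof. intros H. apply sum_trunc_nonneg. intros s Hs. apply Rmult_le_pos; auto. apply trT_nonneg. Qed.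

Lemma coef1 d : q + (1-q)*ps*w1 d + c1 d = 1.
Proof. unfold B.w1, B.c1. destruct (dbar <=? d); ring. Qed.
Lemma coef2 d : p + (1-p)*ps*w2 d + c2 d = 1.
Proof. unfold B.w2, B.c2. destruct (dund <=? d); ring. Qed.

Lemma ST_mass v : sum_trunc NN (ST v) = sum_trunc NN v.
Proof.
  unfold sum_trunc at 1. rewrite ST_000, ST_110.
  rewrite (rsum_shift (S M) (fun k => ST v (true,false,S k))), (rsum_shift (S M) (fun k => ST v (false,true,S k))).
  change (rsum (S M) (fun k => ST v (true,false,S (S k)))) with (rsum M (fun k => ST v (true,false,S (S k))) + ST v (true,false,NN)).
  change (rsum (S M) (fun k => ST v (false,true,S (S k)))) with (rsum M (fun k => ST v (false,true,S (S k))) + ST v (false,true,NN)).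
  rewrite ST_10_1, ST_01_1, ST_10_N, ST_01_N.
  rewrite (rsum_ext M (fun k => ST v (true,false,S (S k))) (fun k => c1 (S k) * v (true,false,S k))) by (intros; apply ST_10_SS; auto).
  rewrite (rsum_ext M (fun k => ST v (false,true,S (S k))) (fun k => c2 (S k) * v (false,true,S k))) by (intros; apply ST_01_SS; auto).
  unfold sum_trunc.
  change (rsum NN ?f) with (rsum M f + f M + f (S M)).
  assert (E1 : rsum M (fun k => v (true,false,S k)) = q * rsum M (fun k => v (true,false,S k)) + (1-q)*ps * rsum M (fun k => w1 (S k) * v (true,false,S k)) + rsum M (fun k => c1 (S k) * v (true,false,S k))).
  { rewrite <- !rsum_scal, <- !rsum_plus. apply rsum_ext. intros k _. unfold B.w1, B.c1. destruct (dbar <=? S k); ring. }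
  assert (E2 : rsum M (fun k => v (false,true,S k)) = p * rsum M (fun k => v (false,true,S k)) + (1-p)*ps * rsum M (fun k => w2 (S k) * v (false,true,S k)) + rsum M (fun k => c2 (S k) * v (false,true,S k))).
  { rewrite <- !rsum_scal, <- !rsum_plus. apply rsum_ext. intros k _. unfold B.w2, B.c2. destruct (dund <=? S k); ring. }
  cbv beta. rewrite E1 at 2. rewrite E2 at 2.
  unfold B.w1, B.c1, B.w2, B.c2.
  destruct (dbar <=? S M), (dbar <=? NN), (dund <=? S M), (dund <=? NN); ring.
Qed.
End Dist.

End F.
Import F.

Module G.

Section Cost.
Variables p q ps beta lam : R.
Variables dbar dund M : nat.
Hypothesis hp : 0 < p < 1.
Hypothesis hq : 0 < q < 1.
Hypothesis hps : 0 < ps <= 1.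
Hypothesis hdbar : (1 <= dbar <= S M)%nat.
Hypothesis hdund : (1 <= dund <= S M)%nat.
Notation NN := (S (S M)).
Notation ST := (ST p q ps dbar dund M).
Notation SO := (SO p q ps dbar dund).
Notation c1 := (c1 q ps dbar).
Notation c2 := (c2 p ps dund).
Notation w1 := (w1 dbar).
Notation w2 := (w2 dund).
Notation lumpO := (lumpO M).
Notation dO := (dO p q ps dbar dund).
Notation dT := (dT p q ps dbar dund M).

Lemma dT_nonneg t s : in_trunc NN s -> 0 <= dT t s.
Proof.
  revert s. induction t; intros s Hs.
  - change (0 <= ind (false,false,0%nat) s). unfold ind. destruct (state_eqb s _); lra.
  - rewrite dT_S. apply (ST_nonneg p q ps dbar dund M hp hq hps); intros; apply IHt; auto.
Qed.

Lemma dT_sum t : sum_trunc NN (dT t) = 1.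
Proof.
  induction t.
  - unfold sum_trunc. change (dT 0) with (ind (false,false,0%nat)). rewrite (ind_eq _ (false,false,0%nat)) by reflexivity.
    rewrite (ind_ne _ (true,true,0%nat)) by solve_ne. rewrite !rsum_zero by (intros; apply ind_ne; solve_ne). ring.
  - change (sum_trunc NN (ST (dT t)) = 1). rewrite (ST_mass p q ps dbar dund M). exact IHt.
Qed.

Lemma dT_le1 t s : in_trunc NN s -> dT t s <= 1.
Proof. intros Hs. rewrite <- (dT_sum t). apply sum_trunc_ge; auto. intros; apply dT_nonneg; auto. Qed.

Lemma dO_zero10 t x : (t < x)%nat -> dO t (true,false,x) = 0.
Proof. intros H. destruct x as [|k]; [lia|]. apply (proj1 (dO_supp p q ps dbar dund M hdbar hdund t k ltac:(lia))). Qed.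
Lemma dO_zero01 t x : (t < x)%nat -> dO t (false,true,x) = 0.
Proof. intros H. destruct x as [|k]; [lia|]. apply (proj2 (dO_supp p q ps dbar dund M hdbar hdund t k ltac:(lia))). Qed.

Definition stO s := stage p q ps age_orig beta lam s (switching dbar dund s).
Definition stT s := stage p q ps (age_trunc NN) beta lam s (switching dbar dund s).

Lemma stO_10 k : stO (true,false,S k) = c1 (S k) * beta * INR (S (S k)) + lam * w1 (S k).
Proof. unfold stO, stage. rewrite Enext_10. unfold cost, B.c1, B.w1, age_orig. simpl switching. destruct (dbar <=? S k); ring. Qed.
Lemma stT_10 k : stT (true,false,S k) = c1 (S k) * beta * INR (Nat.min (S (S k)) NN) + lam * w1 (S k).
Proof. unfold stT, stage. rewrite Enext_10. unfold cost, B.c1, B.w1, age_trunc. simpl switching. destruct (dbar <=? S k); ring. Qed.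
Lemma stO_01 k : stO (false,true,S k) = c2 (S k) * (1-beta) * INR (S (S k)) + lam * w2 (S k).
Proof. unfold stO, stage. rewrite Enext_01. unfold cost, B.c2, B.w2, age_orig. simpl switching. destruct (dund <=? S k); ring. Qed.
Lemma stT_01 k : stT (false,true,S k) = c2 (S k) * (1-beta) * INR (Nat.min (S (S k)) NN) + lam * w2 (S k).
Proof. unfold stT, stage. rewrite Enext_01. unfold cost, B.c2, B.w2, age_trunc. simpl switching. destruct (dund <=? S k); ring. Qed.
Lemma st_00 : stO (false,false,0%nat) = stT (false,false,0%nat).
Proof. unfold stO, stT, stage. simpl switching. rewrite !Enext_00. unfold age_trunc, age_orig. replace (Nat.min 1 NN) with 1%nat by lia. reflexivity. Qed.
Lemma st_11 : stO (true,true,0%nat) = stT (true,true,0%nat).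
Proof. unfold stO, stT, stage. simpl switching. rewrite !Enext_11. unfold age_trunc, age_orig. replace (Nat.min 1 NN) with 1%nat by lia. reflexivity. Qed.

Lemma c1_tl j : c1 (S (S (M + j))) = c1 NN.
Proof. unfold B.c1. destruct (Nat.leb_spec dbar (S (S (M+j)))), (Nat.leb_spec dbar NN); try lia; ring. Qed.
Lemma c2_tl j : c2 (S (S (M + j))) = c2 NN.
Proof. unfold B.c2. destruct (Nat.leb_spec dund (S (S (M+j)))), (Nat.leb_spec dund NN); try lia; ring. Qed.
Lemma w1_tl j : w1 (S (S (M + j))) = w1 NN.
Proof. unfold B.w1. destruct (Nat.leb_spec dbar (S (S (M+j)))), (Nat.leb_spec dbar NN); try lia; ring. Qed.
Lemma w2_tl j : w2 (S (S (M + j))) = w2 NN.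
Proof. unfold B.w2. destruct (Nat.leb_spec dund (S (S (M+j)))), (Nat.leb_spec dund NN); try lia; ring. Qed.

Definition F1 t := Series (fun j => INR (S j) * dO t (true,false,NN + j)%nat).
Definition F2 t := Series (fun j => INR (S j) * dO t (false,true,NN + j)%nat).
Definition m1 t := Series (fun j => dO t (true,false,NN + j)%nat).
Definition m2 t := Series (fun j => dO t (false,true,NN + j)%nat).

Lemma part10 t : Series (fun k => dO t (true,false,S k) * stO (true,false,S k)) =
  rsum NN (fun k => dT t (true,false,S k) * stT (true,false,S k)) + beta * c1 NN * F1 t.
Proof.
  rewrite (Series_split _ (S M)).
  2: { apply (ex_series_fin _ t). intros k Hk. rewrite dO_zero10 by lia. ring. }
  change (rsum NN ?f) with (rsum (S M) f + f (S M)).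
  rewrite (rsum_ext (S M) (fun k => dT t (true,false,S k) * stT (true,false,S k)) (fun k => dO t (true,false,S k) * stO (true,false,S k))).
  2: { intros k Hk. rewrite (dT_lump p q ps dbar dund M hdbar hdund) by (right; right; exists (S k); split; [lia|auto]).
       simpl lumpO. destruct (Nat.eqb_spec k (S M)); [lia|]. rewrite stO_10, stT_10. do 4 f_equal. lia. }
  rewrite (dT_lump p q ps dbar dund M hdbar hdund) by (right; right; exists NN; split; [lia|auto]).
  simpl lumpO. rewrite Nat.eqb_refl. rewrite stT_10. replace (Nat.min (S NN) NN) with NN by lia.
  rewrite (Series_ext _ (fun j => (c1 NN * beta * INR NN + lam * w1 NN) * dO t (true,false,NN+j)%nat + beta * c1 NN * (INR (S j) * dO t (true,false,NN+j)%nat))).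
  2: { intros j. change (S M + j)%nat with (S (M + j)). rewrite stO_10, c1_tl, w1_tl.
       change (NN + j)%nat with (S (S (M + j))). replace (INR (S (S (S (M+j))))) with (INR NN + INR (S j)) by (rewrite <- plus_INR; f_equal; lia). ring. }
  rewrite Series_plus, !Series_scal_l. unfold F1. change (fun j => dO t (true,false,S (S (M+j)))) with (fun j => dO t (true,false,(NN+j)%nat)). ring.
  all: apply (ex_series_fin _ t); intros k Hk; rewrite dO_zero10 by lia; ring.
Qed.
Lemma part01 t : Series (fun k => dO t (false,true,S k) * stO (false,true,S k)) =
  rsum NN (fun k => dT t (false,true,S k) * stT (false,true,S k)) + (1-beta) * c2 NN * F2 t.
Proof.
  rewrite (Series_split _ (S M)).
  2: { apply (ex_series_fin _ t). intros k Hk. rewrite dO_zero01 by lia. ring. }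
  change (rsum NN ?f) with (rsum (S M) f + f (S M)).
  rewrite (rsum_ext (S M) (fun k => dT t (false,true,S k) * stT (false,true,S k)) (fun k => dO t (false,true,S k) * stO (false,true,S k))).
  2: { intros k Hk. rewrite (dT_lump p q ps dbar dund M hdbar hdund) by (right; right; exists (S k); split; [lia|auto]).
       simpl lumpO. destruct (Nat.eqb_spec k (S M)); [lia|]. rewrite stO_01, stT_01. do 4 f_equal. lia. }
  rewrite (dT_lump p q ps dbar dund M hdbar hdund) by (right; right; exists NN; split; [lia|auto]).
  simpl lumpO. rewrite Nat.eqb_refl. rewrite stT_01. replace (Nat.min (S NN) NN) with NN by lia.
  rewrite (Series_ext _ (fun j => (c2 NN * (1-beta) * INR NN + lam * w2 NN) * dO t (false,true,NN+j)%nat + (1-beta) * c2 NN * (INR (S j) * dO t (false,true,NN+j)%nat))).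
  2: { intros j. change (S M + j)%nat with (S (M + j)). rewrite stO_01, c2_tl, w2_tl.
       change (NN + j)%nat with (S (S (M + j))). replace (INR (S (S (S (M+j))))) with (INR NN + INR (S j)) by (rewrite <- plus_INR; f_equal; lia). ring. }
  rewrite Series_plus, !Series_scal_l. unfold F2. change (fun j => dO t (false,true,S (S (M+j)))) with (fun j => dO t (false,true,(NN+j)%nat)). ring.
  all: apply (ex_series_fin _ t); intros k Hk; rewrite dO_zero01 by lia; ring.
Qed.

Lemma decomp t : sum_orig (fun s => dO t s * stO s) = sum_trunc NN (fun s => dT t s * stT s) + beta * c1 NN * F1 t + (1-beta) * c2 NN * F2 t.
Proof.
  unfold sum_orig, sum_trunc. rewrite part10, part01.
  rewrite !(dT_lump p q ps dbar dund M hdbar hdund) by ((left; reflexivity) || (right; left; reflexivity)).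
  simpl lumpO. rewrite st_00, st_11. ring.
Qed.

Lemma dO_SO t x : dO (S t) x = SO (dO t) x.
Proof. reflexivity. Qed.

Lemma m1_S t : m1 (S t) = c1 NN * (dO t (true,false,S M) + m1 t).
Proof. unfold m1. rewrite (Series_ext _ (fun j => SO (dO t) (true,false,NN+j)%nat)) by reflexivity.
  apply (top10 p q ps dbar dund M hdbar hdund). apply (dO_summ p q ps dbar dund M hdbar hdund). Qed.
Lemma m2_S t : m2 (S t) = c2 NN * (dO t (false,true,S M) + m2 t).
Proof. unfold m2. rewrite (Series_ext _ (fun j => SO (dO t) (false,true,NN+j)%nat)) by reflexivity.
  apply (top01 p q ps dbar dund M hdbar hdund). apply (dO_summ p q ps dbar dund M hdbar hdund). Qed.

Lemma F1_S t : F1 (S t) = c1 NN * F1 t + m1 (S t).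
Proof.
  rewrite m1_S. unfold F1.
  rewrite (Series_ext _ (fun j => c1 NN * (INR (S j) * dO t (true,false,S (M + j))))).
  2: { intros j. rewrite dO_SO. change (NN + j)%nat with (S (S (M + j))). rewrite SO_10_SS, (c1_tail q ps dbar dund M hdbar hdund). ring. }
  rewrite Series_scal_l. rewrite Series_incr_1.
  2: { apply (ex_series_fin _ t). intros k Hk. rewrite dO_zero10 by lia. ring. }
  rewrite (Series_ext _ (fun j => INR (S j) * dO t (true,false,NN+j)%nat + dO t (true,false,NN+j)%nat)).
  2: { intros j. replace (S (M + S j)) with (NN + j)%nat by lia. rewrite (S_INR (S j)). ring. }
  rewrite Series_plus. unfold m1. rewrite Nat.add_0_r. simpl (INR 1). ring.
  all: apply (ex_series_fin _ t); intros k Hk; rewrite dO_zero10 by lia; ring.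
Qed.
Lemma F2_S t : F2 (S t) = c2 NN * F2 t + m2 (S t).
Proof.
  rewrite m2_S. unfold F2.
  rewrite (Series_ext _ (fun j => c2 NN * (INR (S j) * dO t (false,true,S (M + j))))).
  2: { intros j. rewrite dO_SO. change (NN + j)%nat with (S (S (M + j))). rewrite SO_01_SS, (c2_tail p ps dbar dund M hdbar hdund). ring. }
  rewrite Series_scal_l. rewrite Series_incr_1.
  2: { apply (ex_series_fin _ t). intros k Hk. rewrite dO_zero01 by lia. ring. }
  rewrite (Series_ext _ (fun j => INR (S j) * dO t (false,true,NN+j)%nat + dO t (false,true,NN+j)%nat)).
  2: { intros j. replace (S (M + S j)) with (NN + j)%nat by lia. rewrite (S_INR (S j)). ring. }
  rewrite Series_plus. unfold m2. rewrite Nat.add_0_r. simpl (INR 1). ring.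
  all: apply (ex_series_fin _ t); intros k Hk; rewrite dO_zero01 by lia; ring.
Qed.

Lemma m1_dT t : m1 t = dT t (true,false,NN).
Proof. rewrite (dT_lump p q ps dbar dund M hdbar hdund) by (right; right; exists NN; split; [lia|auto]). simpl lumpO. rewrite Nat.eqb_refl. reflexivity. Qed.
Lemma m2_dT t : m2 t = dT t (false,true,NN).
Proof. rewrite (dT_lump p q ps dbar dund M hdbar hdund) by (right; right; exists NN; split; [lia|auto]). simpl lumpO. rewrite Nat.eqb_refl. reflexivity. Qed.
Lemma F1_0 : F1 0 = 0.
Proof. unfold F1. apply Series_zero. intros k. rewrite dO_zero10 by lia. ring. Qed.
Lemma F2_0 : F2 0 = 0.
Proof. unfold F2. apply Series_zero. intros k. rewrite dO_zero01 by lia. ring. Qed.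
Lemma m1_0 : m1 0 = 0.
Proof. unfold m1. apply Series_zero. intros k. rewrite dO_zero10 by lia. ring. Qed.
Lemma m2_0 : m2 0 = 0.
Proof. unfold m2. apply Series_zero. intros k. rewrite dO_zero01 by lia. ring. Qed.
End Cost.

End G.
Import G.

Module H.

Lemma LimSup_minus_lim (a b : nat -> R) (l : R) : is_lim_seq b l ->
  LimSup_seq (fun n => a n - b n) = Rbar_minus (LimSup_seq a) l.
Proof.
  intros Hb. apply is_lim_seq_spec in Hb.
  apply is_LimSup_seq_unique.
  pose proof (proj2_sig (ex_LimSup_seq a)) as Ha. change (is_LimSup_seq a (LimSup_seq a)) in Ha.
  destruct (LimSup_seq a) as [L| |]; simpl in *.
  - intros eps. assert (He : 0 < eps / 2) by (destruct eps; simpl; lra).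
    destruct (Ha (mkposreal _ He)) as [H1 [N1 H2]]. destruct (Hb (mkposreal _ He)) as [N2 H3]. simpl in *.
    split.
    + intros N. destruct (H1 (Nat.max N N2)) as [n [Hn H4]]. exists n. split; [lia|].
      specialize (H3 n ltac:(lia)). apply Rabs_def2 in H3. lra.
    + exists (Nat.max N1 N2). intros n Hn. specialize (H2 n ltac:(lia)). specialize (H3 n ltac:(lia)).
      apply Rabs_def2 in H3. lra.
  - intros M0 N. destruct (Hb (mkposreal 1 Rlt_0_1)) as [N2 H3]. destruct (Ha (M0 + l + 1) (Nat.max N N2)) as [n [Hn H4]].
    exists n. split; [lia|]. specialize (H3 n ltac:(lia)). simpl in H3. apply Rabs_def2 in H3. lra.
  - intros M0. destruct (Hb (mkposreal 1 Rlt_0_1)) as [N2 H3]. destruct (Ha (M0 + l - 1)) as [N1 H4].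
    exists (Nat.max N1 N2). intros n Hn. specialize (H3 n ltac:(lia)). specialize (H4 n ltac:(lia)). simpl in H3. apply Rabs_def2 in H3. lra.
Qed.

Lemma lim_inv_S : is_lim_seq (fun T => / INR (S T)) 0.
Proof.
  replace (Finite 0) with (Rbar_inv p_infty) by reflexivity.
  apply is_lim_seq_inv; [|discriminate].
  apply (is_lim_seq_incr_1 INR). apply is_lim_seq_INR.
Qed.

Lemma lim0_bounded_div (f : nat -> R) (B : R) : (forall T, Rabs (f T) <= B) -> lim0 (fun T => / INR (S T) * f T).
Proof.
  intros H. apply (is_lim_seq_le_le (fun T => - (B * / INR (S T))) _ (fun T => B * / INR (S T))).
  - intros T. pose proof (H T) as HT. apply Rabs_le_between in HT. assert (0 < / INR (S T)) by (apply Rinv_0_lt_compat, lt_0_INR; lia).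
    split; nra.
  - apply (lim0_ext (fun T => (-B) * / INR (S T))). intros; ring. apply lim0_scal, lim_inv_S.
  - apply lim0_scal, lim_inv_S.
Qed.

Lemma sumf_tele (a : nat -> R) T : sum_f_R0 (fun t => a t - a (S t)) T = a 0%nat - a (S T).
Proof. induction T; simpl; [ring|]. rewrite IHT. ring. Qed.

Lemma sumf_plus (f g : nat -> R) T : sum_f_R0 (fun t => f t + g t) T = sum_f_R0 f T + sum_f_R0 g T.
Proof. induction T; simpl; [ring|]. rewrite IHT. ring. Qed.
Lemma sumf_minus (f g : nat -> R) T : sum_f_R0 (fun t => f t - g t) T = sum_f_R0 f T - sum_f_R0 g T.
Proof. induction T; simpl; [ring|]. rewrite IHT. ring. Qed.
Lemma sumf_scal (f : nat -> R) c T : sum_f_R0 (fun t => c * f t) T = c * sum_f_R0 f T.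
Proof. induction T; simpl; [ring|]. rewrite IHT. ring. Qed.

Lemma sum_trunc_sumf N (f : nat -> state -> R) T : sum_trunc N (fun s => sum_f_R0 (fun t => f t s) T) = sum_f_R0 (fun t => sum_trunc N (f t)) T.
Proof.
  induction T; simpl. reflexivity.
  rewrite <- IHT. rewrite <- (Rmult_1_l (sum_trunc N (fun s => sum_f_R0 _ T))), <- (Rmult_1_l (sum_trunc N (f (S T)))).
  rewrite <- sum_trunc_lin. apply sum_trunc_ext. intros; ring.
Qed.
Lemma sum_trunc_scal N f c : sum_trunc N (fun s => c * f s) = c * sum_trunc N f.
Proof. rewrite <- (Rplus_0_r (c * sum_trunc N f)), <- (Rmult_0_l (sum_trunc N f)), <- sum_trunc_lin. apply sum_trunc_ext. intros; ring. Qed.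


Section Final.
Variables p q ps beta lam : R.
Variables dbar dund M : nat.
Hypothesis hp : 0 < p < 1.
Hypothesis hq : 0 < q < 1.
Hypothesis hps : 0 < ps <= 1.
Hypothesis hdbar : (1 <= dbar <= S M)%nat.
Hypothesis hdund : (1 <= dund <= S M)%nat.
Notation NN := (S (S M)).
Notation ST := (ST p q ps dbar dund M).
Notation c1 := (c1 q ps dbar).
Notation c2 := (c2 p ps dund).
Notation lumpO := (lumpO M).
Notation dO := (dO p q ps dbar dund).
Notation dT := (dT p q ps dbar dund M).

Lemma ST_ext v v' t : (forall s, v s = v' s) -> ST v t = ST v' t.
Proof. intros H. replace v' with v by (apply functional_extensionality; auto). reflexivity. Qed.

Lemma ST_sumf (f : nat -> state -> R) T x : ST (fun s => sum_f_R0 (fun t => f t s) T) x = sum_f_R0 (fun t => ST (f t) x) T.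
Proof.
  induction T; simpl. apply ST_ext; reflexivity.
  rewrite <- IHT. rewrite (ST_ext _ (fun s => 1 * sum_f_R0 (fun t => f t s) T + 1 * f (S T) s)) by (intros; ring).
  rewrite (ST_lin p q ps dbar dund M). ring.
Qed.
Lemma ST_scal v c x : ST (fun s => c * v s) x = c * ST v x.
Proof. rewrite (ST_ext _ (fun s => c * v s + 0 * v s)) by (intros; ring). rewrite (ST_lin p q ps dbar dund M). ring. Qed.

Definition vC T s := / INR (S T) * sum_f_R0 (fun t => dT t s) T.

Variable nu : state -> R.
Hypothesis Hnu : stationary_orig p q ps dbar dund nu.

Lemma vC_conv s : in_trunc NN s -> is_lim_seq (fun T => vC T s) (lumpO nu s).
Proof.
  apply (conv p q ps dbar dund M hp hq hps hdbar hdund (lumpO nu) vC).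
  - apply (lump_nu_nonneg p q ps dbar dund M hdbar hdund nu Hnu).
  - apply (lump_nu_sum p q ps dbar dund M hdbar hdund nu Hnu).
  - apply (lump_nu_stat p q ps dbar dund M hdbar hdund nu Hnu).
  - intros t Ht. eapply lim0_ext; [|apply (lim0_bounded_div (fun T => dT 0 t - dT (S T) t) 1)].
    + intros T. cbv beta. unfold vC. rewrite ST_scal, ST_sumf. rewrite <- Rmult_minus_distr_l. f_equal.
      rewrite <- sumf_minus. rewrite <- (sumf_tele (fun u => dT u t)). apply sum_eq. intros; reflexivity.
    + intros T. pose proof (dT_nonneg p q ps dbar dund M hp hq hps 0 t Ht).
      pose proof (dT_nonneg p q ps dbar dund M hp hq hps (S T) t Ht).
      pose proof (dT_le1 p q ps dbar dund M hp hq hps 0 t Ht).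
      pose proof (dT_le1 p q ps dbar dund M hp hq hps (S T) t Ht).
      apply Rabs_le. lra.
  - intros T. unfold vC. rewrite sum_trunc_scal, sum_trunc_sumf.
    rewrite (sum_eq _ (fun _ => 1)) by (intros; apply dT_sum). rewrite sum_cte.
    field. apply not_0_INR. lia.
Qed.

Notation F1 := (F1 p q ps dbar dund M).
Notation F2 := (F2 p q ps dbar dund M).
Notation m1 := (m1 p q ps dbar dund M).
Notation m2 := (m2 p q ps dbar dund M).

Lemma m1_bd t : 0 <= m1 t <= 1.
Proof. rewrite (m1_dT p q ps dbar dund M hdbar hdund).
  assert (in_trunc NN (true,false,NN)) by (right; right; exists NN; split; [lia|auto]).
  split; [apply (dT_nonneg p q ps dbar dund M hp hq hps)|apply (dT_le1 p q ps dbar dund M hp hq hps)]; auto. Qed.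
Lemma m2_bd t : 0 <= m2 t <= 1.
Proof. rewrite (m2_dT p q ps dbar dund M hdbar hdund).
  assert (in_trunc NN (false,true,NN)) by (right; right; exists NN; split; [lia|auto]).
  split; [apply (dT_nonneg p q ps dbar dund M hp hq hps)|apply (dT_le1 p q ps dbar dund M hp hq hps)]; auto. Qed.

Lemma F1_bd t : 0 <= F1 t <= / (1 - c1 NN).
Proof.
  pose proof (c1NN_lt q ps dbar dund M hq hps hdbar hdund). pose proof (c1NN q ps dbar dund M hdbar hdund).
  assert (0 <= c1 NN) by (rewrite H0; nra).
  assert (1 <= / (1 - c1 NN)) by (rewrite <- Rinv_1; apply Rinv_le_contravar; lra).
  induction t.
  - rewrite (F1_0 p q ps dbar dund M hdbar hdund). lra.
  - rewrite (F1_S p q ps dbar dund M hdbar hdund). pose proof (m1_bd (S t)).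
    split. nra. apply (Rmult_le_reg_l (1 - c1 NN)); [lra|]. rewrite Rinv_r by lra.
    assert (c1 NN * F1 t <= c1 NN * / (1 - c1 NN)) by (apply Rmult_le_compat_l; lra).
    assert ((1 - c1 NN) * (c1 NN * F1 t + m1 (S t)) <= (1 - c1 NN) * (c1 NN * / (1 - c1 NN) + 1)) by (apply Rmult_le_compat_l; lra).
    replace ((1 - c1 NN) * (c1 NN * / (1 - c1 NN) + 1)) with 1 in H5 by (field; lra). lra.
Qed.
Lemma F2_bd t : 0 <= F2 t <= / (1 - c2 NN).
Proof.
  pose proof (c2NN_lt p q ps dbar dund M hp hq hps hdbar hdund). pose proof (c2NN p ps dbar dund M hdbar hdund).
  assert (0 <= c2 NN) by (rewrite H0; nra).
  assert (1 <= / (1 - c2 NN)) by (rewrite <- Rinv_1; apply Rinv_le_contravar; lra).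
  induction t.
  - rewrite (F2_0 p q ps dbar dund M hdbar hdund). lra.
  - rewrite (F2_S p q ps dbar dund M hdbar hdund). pose proof (m2_bd (S t)).
    split. nra. apply (Rmult_le_reg_l (1 - c2 NN)); [lra|]. rewrite Rinv_r by lra.
    assert (c2 NN * F2 t <= c2 NN * / (1 - c2 NN)) by (apply Rmult_le_compat_l; lra).
    assert ((1 - c2 NN) * (c2 NN * F2 t + m2 (S t)) <= (1 - c2 NN) * (c2 NN * / (1 - c2 NN) + 1)) by (apply Rmult_le_compat_l; lra).
    replace ((1 - c2 NN) * (c2 NN * / (1 - c2 NN) + 1)) with 1 in H5 by (field; lra). lra.
Qed.

Lemma F1_id T : (1 - c1 NN) * sum_f_R0 F1 T = sum_f_R0 m1 T - c1 NN * F1 T.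
Proof.
  induction T; simpl.
  - rewrite (F1_0 p q ps dbar dund M hdbar hdund), (m1_0 p q ps dbar dund M hdbar hdund). ring.
  - rewrite (F1_S p q ps dbar dund M hdbar hdund). rewrite Rmult_plus_distr_l, IHT. ring.
Qed.
Lemma F2_id T : (1 - c2 NN) * sum_f_R0 F2 T = sum_f_R0 m2 T - c2 NN * F2 T.
Proof.
  induction T; simpl.
  - rewrite (F2_0 p q ps dbar dund M hdbar hdund), (m2_0 p q ps dbar dund M hdbar hdund). ring.
  - rewrite (F2_S p q ps dbar dund M hdbar hdund). rewrite Rmult_plus_distr_l, IHT. ring.
Qed.

Lemma F1_ces : is_lim_seq (fun T => / INR (S T) * sum_f_R0 F1 T) (lumpO nu (true,false,NN) / (1 - c1 NN)).
Proof.
  pose proof (c1NN_lt q ps dbar dund M hq hps hdbar hdund).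
  pose proof (vC_conv (true,false,NN) ltac:(right; right; exists NN; split; [lia|auto])) as H1.
  apply lim0_lim in H1. apply lim0_lim.
  pose proof (lim0_bounded_div F1 (/ (1 - c1 NN)) ltac:(intros T; pose proof (F1_bd T); rewrite Rabs_right; lra)) as H2.
  eapply lim0_ext; [|apply (lim0_lin _ _ (/ (1 - c1 NN)) (- c1 NN / (1 - c1 NN)) H1 H2)].
  intros T. cbv beta. unfold vC.
  rewrite (sum_eq (fun t => dT t (true,false,NN)) m1) by (intros; symmetry; apply (m1_dT p q ps dbar dund M hdbar hdund)).
  rewrite <- (Rplus_0_r (sum_f_R0 m1 T)), <- (Rminus_diag_eq (c1 NN * F1 T) (c1 NN * F1 T)) by reflexivity.
  replace (sum_f_R0 m1 T + (c1 NN * F1 T - c1 NN * F1 T)) with ((1 - c1 NN) * sum_f_R0 F1 T + c1 NN * F1 T) by (rewrite F1_id; ring).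
  field. split; [lra|]. apply not_0_INR; lia.
Qed.
Lemma F2_ces : is_lim_seq (fun T => / INR (S T) * sum_f_R0 F2 T) (lumpO nu (false,true,NN) / (1 - c2 NN)).
Proof.
  pose proof (c2NN_lt p q ps dbar dund M hp hq hps hdbar hdund).
  pose proof (vC_conv (false,true,NN) ltac:(right; right; exists NN; split; [lia|auto])) as H1.
  apply lim0_lim in H1. apply lim0_lim.
  pose proof (lim0_bounded_div F2 (/ (1 - c2 NN)) ltac:(intros T; pose proof (F2_bd T); rewrite Rabs_right; lra)) as H2.
  eapply lim0_ext; [|apply (lim0_lin _ _ (/ (1 - c2 NN)) (- c2 NN / (1 - c2 NN)) H1 H2)].
  intros T. cbv beta. unfold vC.
  rewrite (sum_eq (fun t => dT t (false,true,NN)) m2) by (intros; symmetry; apply (m2_dT p q ps dbar dund M hdbar hdund)).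
  rewrite <- (Rplus_0_r (sum_f_R0 m2 T)), <- (Rminus_diag_eq (c2 NN * F2 T) (c2 NN * F2 T)) by reflexivity.
  replace (sum_f_R0 m2 T + (c2 NN * F2 T - c2 NN * F2 T)) with ((1 - c2 NN) * sum_f_R0 F2 T + c2 NN * F2 T) by (rewrite F2_id; ring).
  field. split; [lra|]. apply not_0_INR; lia.
Qed.
End Final.

End H.
Import H.

Theorem proposition5 (p q ps beta lam : R) (dbar dund N : nat)
  (nu nuN : state -> R) :
  0 < p < 1 -> 0 < q < 1 -> 0 < ps <= 1 -> 0 <= beta <= 1 -> 0 <= lam ->
  (1 <= dbar)%nat -> (1 <= dund)%nat -> (Nat.max dbar dund < N)%nat ->
  stationary_orig p q ps dbar dund nu ->
  stationary_trunc p q ps N dbar dund nuN ->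
  (forall s, in_trunc N s -> s <> (true, false, N) -> s <> (false, true, N) ->
     nuN s = nu s) /\
  nuN (true, false, N) =
    (1 - q) * (1 - ps) / (1 - (1 - q) * (1 - ps)) * nu (true, false, (N - 1)%nat) /\
  nuN (false, true, N) =
    (1 - p) * (1 - ps) / (1 - (1 - p) * (1 - ps)) * nu (false, true, (N - 1)%nat) /\
  L_trunc p q ps beta lam N dbar dund =
    Rbar_minus (L_orig p q ps beta lam dbar dund)
      (Finite (beta * nu (false, false, 0%nat) * p * (1 - q) ^ N
                 * (1 - ps) ^ (N - dbar + 1) / (1 - (1 - q) * (1 - ps)) ^ 2
               + (1 - beta) * nu (true, true, 0%nat) * q * (1 - p) ^ N
                 * (1 - ps) ^ (N - dund + 1) / (1 - (1 - p) * (1 - ps)) ^ 2)).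
Proof.
  intros hp hq hps hb hl H1 H2 HN Hnu HnuN.
  destruct N as [|[|M]]; try lia.
  assert (hdbar : (1 <= dbar <= S M)%nat) by lia.
  assert (hdund : (1 <= dund <= S M)%nat) by lia.
  pose proof (nuN_eq p q ps dbar dund M hp hq hps hdbar hdund nu Hnu nuN HnuN) as Heq.
  pose proof (nu_top10 p q ps dbar dund M hq hps hdbar hdund nu Hnu) as T1.
  pose proof (nu_top01 p q ps dbar dund M hp hq hps hdbar hdund nu Hnu) as T2.
  pose proof (c1NN q ps dbar dund M hdbar hdund) as C1.
  pose proof (c2NN p ps dbar dund M hdbar hdund) as C2.
  replace (S (S M) - 1)%nat with (S M) by lia.
  assert (P10 : nuN (true,false,S (S M)) = (1 - q) * (1 - ps) / (1 - (1 - q) * (1 - ps)) * nu (true, false, S M)).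
  { rewrite Heq by (right; right; exists (S (S M)); split; [lia|auto]).
    change (lumpO M nu (true,false,S (S M))) with (if (S (S M) =? S (S M))%nat then Series (fun j => nu (true,false,(S (S M) + j)%nat)) else nu (true,false,S (S M))). rewrite Nat.eqb_refl.
    rewrite T1, C1. reflexivity. }
  assert (P01 : nuN (false,true,S (S M)) = (1 - p) * (1 - ps) / (1 - (1 - p) * (1 - ps)) * nu (false, true, S M)).
  { rewrite Heq by (right; right; exists (S (S M)); split; [lia|auto]).
    change (lumpO M nu (false,true,S (S M))) with (if (S (S M) =? S (S M))%nat then Series (fun j => nu (false,true,(S (S M) + j)%nat)) else nu (false,true,S (S M))). rewrite Nat.eqb_refl.
    rewrite T2, C2. reflexivity. }
  split; [|split; [exact P10|split; [exact P01|]]].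
  - intros s Hs Hn1 Hn2. rewrite Heq by auto.
    destruct Hs as [->|[->|[d [Hd [->| ->]]]]]; try reflexivity; simpl lumpO;
    destruct (Nat.eqb_spec d (S (S M))); try reflexivity; subst; contradiction.
  - pose proof (F1_ces p q ps dbar dund M hp hq hps hdbar hdund nu Hnu) as L1.
    pose proof (F2_ces p q ps dbar dund M hp hq hps hdbar hdund nu Hnu) as L2.
    pose proof (c1NN_lt q ps dbar dund M hq hps hdbar hdund) as R1.
    pose proof (c2NN_lt p q ps dbar dund M hp hq hps hdbar hdund) as R2.
    set (r1 := c1 q ps dbar (S (S M))) in *. set (r2 := c2 p ps dund (S (S M))) in *.
    set (aO := fun T => / INR (S T) * sum_f_R0 (fun t => sum_orig (fun s => dO p q ps dbar dund t s * stO p q ps beta lam dbar dund s)) T).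
    set (bT := fun T => beta * r1 * (/ INR (S T) * sum_f_R0 (F1 p q ps dbar dund M) T) + (1-beta) * r2 * (/ INR (S T) * sum_f_R0 (F2 p q ps dbar dund M) T)).
    unfold L_trunc, L_orig, avg_cost. cbv zeta.
    transitivity (LimSup_seq (fun T => aO T - bT T)).
    { f_equal. apply functional_extensionality. intros T. unfold aO, bT.
      rewrite (sum_eq _ (fun t => sum_orig (fun s => dO p q ps dbar dund t s * stO p q ps beta lam dbar dund s) - (beta*r1) * F1 p q ps dbar dund M t - ((1-beta)*r2) * F2 p q ps dbar dund M t)).
      - rewrite !sumf_minus, !sumf_scal. ring.
      - intros t _. rewrite (decomp p q ps beta lam dbar dund M hdbar hdund). unfold dT, stT. fold r1 r2. ring. }
    rewrite (LimSup_minus_lim aO bT (beta * r1 * (lumpO M nu (true,false,S (S M)) / (1 - r1)) + (1-beta) * r2 * (lumpO M nu (false,true,S (S M)) / (1 - r2)))).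
    2: { unfold bT. apply is_lim_seq_plus'; apply is_lim_seq_mult'; auto; apply is_lim_seq_const. }
    f_equal. f_equal.
    rewrite <- !Heq by (right; right; exists (S (S M)); split; [lia|auto]).
    rewrite P10, P01, (nu_10 p q ps dbar dund M hdbar hdund nu Hnu M), (nu_01 p q ps dbar dund M hdbar hdund nu Hnu M).
    rewrite C1, C2 in *.
    replace (S (S M) - dbar + 1)%nat with (S (S (S M - dbar))) by lia.
    replace (S (S M) - dund + 1)%nat with (S (S (S M - dund))) by lia.
    simpl pow. field. split; lra.
Qed.
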